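(* Let $\mathbf b=\{b_n\}_{n=1}^{\infty}$ be a nonnegative real sequence. Suppose there exist a natural number $N_0$ and a constant $M(\mathbf b)>0$ such that $$\sum_{n=m}^{2m}|b_n-b_{n+1}|\le M(\mathbf b)\max_{m\le n<m+N_0}b_n\qquad\text{for all } m=1,2,\dots.$$ Then each of the following two properties holds if and only if $\lim_{n\to\infty}nb_n=0$: (i) the series $\sum_{n=1}^{\infty}b_n\sin nx$ converges uniformly on $\mathbb R$; (ii) the series $\sum_{n=1}^\infty b_n\sin nx$ converges everywhere and its sum function $f(x)$ is continuous. *)

(* Defs.v *)
From Stdlib Require Import Reals List.
Import ListNotations.
Open Scope R_scope.

Fixpoint sin_psum (b : nat -> R) (N : nat) (x : R) : R :=
  match N with
  | O => 0
  | S k => sin_psum b k x + b (S k) * sin (INR (S k) * x)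
  end.

(* max_{m <= n < m + N0} b_n ; for N0 >= 1 and b >= 0 this is the true maximum *)
Definition block_max (b : nat -> R) (m N0 : nat) : R :=
  fold_right Rmax (b m) (map b (seq m N0)).

Definition var_block (b : nat -> R) (m : nat) : R :=
  sum_f m (2 * m) (fun n => Rabs (b n - b (S n))).

Definition sin_series_unif_conv (b : nat -> R) : Prop :=
  exists f : R -> R, forall eps : R, 0 < eps ->
    exists N : nat, forall n : nat, (N <= n)%nat ->
      forall x : R, Rabs (sin_psum b n x - f x) < eps.

Definition sin_series_conv_cont (b : nat -> R) : Prop :=
  exists f : R -> R,
    (forall x : R, Un_cv (fun N => sin_psum b N x) (f x)) /\ continuity f.

(* Main.v *)
Require Import Defs.
From Stdlib Require Import Reals Lra Lia Psatz List ZArith.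
Open Scope R_scope.


Fixpoint sm (g : nat -> R) (K : nat) : R :=
  match K with O => 0 | S k => sm g k + g k end.

Lemma sm_ext g h K : (forall i, (i < K)%nat -> g i = h i) -> sm g K = sm h K.
Proof. induction K; simpl; intros H; auto. rewrite IHK by (intros; apply H; lia). rewrite H by lia. auto. Qed.

Lemma sm_le g h K : (forall i, (i < K)%nat -> g i <= h i) -> sm g K <= sm h K.
Proof. induction K; simpl; intros H; [lra|]. assert (sm g K <= sm h K) by (apply IHK; intros; apply H; lia).
  assert (g K <= h K) by (apply H; lia). lra. Qed.

Lemma sm_add g K1 K2 : sm g (K1 + K2) = sm g K1 + sm (fun i => g (K1 + i)%nat) K2.
Proof. induction K2; simpl. rewrite Nat.add_0_r; lra. rewrite Nat.add_succ_r; simpl. rewrite IHK2; lra. Qed.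

Lemma sm_plus g h K : sm (fun i => g i + h i) K = sm g K + sm h K.
Proof. induction K; simpl; lra. Qed.

Lemma sm_minus g h K : sm (fun i => g i - h i) K = sm g K - sm h K.
Proof. induction K; simpl; lra. Qed.

Lemma sm_scal c g K : sm (fun i => c * g i) K = c * sm g K.
Proof. induction K; simpl. ring. rewrite IHK; ring. Qed.

Lemma sm_abs g K : Rabs (sm g K) <= sm (fun i => Rabs (g i)) K.
Proof. induction K; simpl. rewrite Rabs_R0; lra.
  eapply Rle_trans. apply Rabs_triang. lra. Qed.

Lemma sm_nonneg g K : (forall i, (i < K)%nat -> 0 <= g i) -> 0 <= sm g K.
Proof. intros H. replace 0 with (sm (fun _ => 0) K). apply sm_le; auto.
  induction K; simpl; auto. rewrite IHK; [lra|]. intros; apply H; lia. Qed.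

Lemma sm_const c K : sm (fun _ => c) K = INR K * c.
Proof. induction K; simpl sm. simpl; lra. rewrite IHK, S_INR; ring. Qed.

Lemma sm_mono g K K' : (forall i, 0 <= g i) -> (K <= K')%nat -> sm g K <= sm g K'.
Proof. intros H HK. replace K' with (K + (K' - K))%nat by lia. rewrite sm_add.
  assert (0 <= sm (fun i => g (K+i)%nat) (K'-K)) by (apply sm_nonneg; auto). lra. Qed.

Lemma sm_mono' g K K' : (forall i, (i < K')%nat -> 0 <= g i) -> (K <= K')%nat -> sm g K <= sm g K'.
Proof. intros H HK. replace K' with (K + (K' - K))%nat by lia. rewrite sm_add.
  assert (0 <= sm (fun i => g (K+i)%nat) (K'-K)) by (apply sm_nonneg; intros; apply H; lia). lra. Qed.

Lemma sin_psum_sm b N x : sin_psum b N x = sm (fun i => b (S i) * sin (INR (S i) * x)) N.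
Proof. induction N; simpl sin_psum; simpl sm; auto. rewrite IHN; auto. Qed.

Lemma sum_f_R0_sm g k : sum_f_R0 g k = sm g (S k).
Proof. induction k; simpl; auto. lra. rewrite IHk; simpl; lra. Qed.

Lemma var_block_sm b m : var_block b m = sm (fun i => Rabs (b (m + i)%nat - b (S (m + i)))) (S m).
Proof. unfold var_block, sum_f. rewrite sum_f_R0_sm. replace (2 * m - m)%nat with m by lia.
  apply sm_ext; intros. rewrite (Nat.add_comm m i); auto. Qed.

Lemma fold_max_le (b : nat -> R) init l X : init <= X -> (forall n, In n l -> b n <= X) ->
  fold_right Rmax init (map b l) <= X.
Proof. induction l; simpl; intros; auto. apply Rmax_lub; auto. Qed.

Lemma fold_max_ge (b : nat -> R) init l : init <= fold_right Rmax init (map b l).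
Proof. induction l; simpl; [lra|]. eapply Rle_trans; [apply IHl| apply Rmax_r]. Qed.

Lemma fold_max_in (b : nat -> R) init l : fold_right Rmax init (map b l) = init \/
  exists n, In n l /\ fold_right Rmax init (map b l) = b n.
Proof. induction l; simpl; auto.
  destruct (Rle_lt_dec (b a) (fold_right Rmax init (map b l))) as [h|h].
  - rewrite Rmax_right by lra. destruct IHl as [H|[n [H1 H2]]]; auto. right; exists n; auto.
  - rewrite Rmax_left by lra. right; exists a; auto.
Qed.

Lemma bm_le b m N0 X : b m <= X -> (forall i, (i < N0)%nat -> b (m+i)%nat <= X) -> block_max b m N0 <= X.
Proof. intros H1 H2. unfold block_max. apply fold_max_le; auto. intros n Hn.
  apply in_seq in Hn. replace n with (m + (n - m))%nat by lia. apply H2. lia. Qed.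

Lemma bm_ge b m N0 : b m <= block_max b m N0.
Proof. apply fold_max_ge. Qed.

Lemma bm_ex b m N0 : (1 <= N0)%nat -> exists p, (m <= p < m + N0)%nat /\ block_max b m N0 = b p.
Proof. intros H. unfold block_max. destruct (fold_max_in b (b m) (seq m N0)) as [E|[n [H1 H2]]].
  exists m; split; [lia|auto]. exists n. apply in_seq in H1. split; [lia|auto]. Qed.

Lemma tel b m K : b (m + K)%nat - b m = sm (fun i => b (S (m + i)) - b (m + i)%nat) K.
Proof. induction K; simpl. rewrite Nat.add_0_r; lra. rewrite <- IHK. rewrite Nat.add_succ_r. lra. Qed.


Lemma PI_gt3 : 3 < PI.
Proof. pose proof PI2_3_2; lra. Qed.

Lemma sin_lo a : 0 <= a -> a <= PI -> a - a^3/6 <= sin a.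
Proof. intros. destruct (sin_bound a 0 H H0) as [H1 _].
  unfold sin_approx, sin_term in H1; simpl in H1. lra. Qed.

Lemma sin_hi a : 0 <= a -> a <= PI -> sin a <= a - a^3/6 + a^5/120.
Proof. intros. destruct (sin_bound a 0 H H0) as [_ H1].
  unfold sin_approx, sin_term in H1; simpl in H1. lra. Qed.

Lemma cos_lo a : -1 <= a <= 1 -> 1 - a^2/2 <= cos a.
Proof. intros. pose proof PI2_1. destruct (cos_bound a 0) as [H1 _]; try lra.
  unfold cos_approx, cos_term in H1; simpl in H1. lra. Qed.

Lemma cos_hi a : -1 <= a <= 1 -> cos a <= 1 - a^2/2 + a^4/24.
Proof. intros. pose proof PI2_1. destruct (cos_bound a 0) as [_ H1]; try lra.
  unfold cos_approx, cos_term in H1; simpl in H1. lra. Qed.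

Lemma sin_le_id a : 0 <= a -> sin a <= a.
Proof. intros. pose proof PI_4. destruct (Rle_lt_dec a PI).
  - pose proof (sin_hi a H r). assert (a^5/120 <= a^3/6). 
    { assert (a^2 <= 20) by nra. assert (0 <= a^3) by (apply pow_le; lra).
      replace (a^5) with (a^3 * a^2) by ring. nra. }
    lra.
  - pose proof (SIN_bound a). pose proof PI_gt3. lra. Qed.

Lemma sin_ge_neg a : 0 <= a -> - a <= sin a.
Proof. intros. destruct (Rle_lt_dec a PI).
  - pose proof (sin_ge_0 a H r). lra.
  - pose proof (SIN_bound a). pose proof PI_gt3. lra. Qed.

Lemma abs_sin_le a : Rabs (sin a) <= Rabs a.
Proof. destruct (Rle_lt_dec 0 a).
  - rewrite (Rabs_right a) by lra. pose proof (sin_le_id a r). pose proof (sin_ge_neg a r).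
    apply Rabs_le; lra.
  - rewrite (Rabs_left a) by lra. replace a with (- (-a)) by ring. rewrite sin_neg.
    rewrite Rabs_Ropp. pose proof (sin_le_id (-a)). pose proof (sin_ge_neg (-a)).
    apply Rabs_le; lra. Qed.

Lemma abs_sin_le1 a : Rabs (sin a) <= 1.
Proof. apply Rabs_le. pose proof (SIN_bound a); lra. Qed.

Lemma abs_cos_le1 a : Rabs (cos a) <= 1.
Proof. apply Rabs_le. pose proof (COS_bound a); lra. Qed.

Lemma sin_mul_bound n y : Rabs (sin (INR n * y)) <= INR n * Rabs (sin y).
Proof. induction n. simpl. rewrite Rmult_0_l, sin_0, Rabs_R0; lra.
  rewrite S_INR. replace ((INR n + 1) * y) with (INR n * y + y) by ring. rewrite sin_plus.
  eapply Rle_trans. apply Rabs_triang. rewrite !Rabs_mult.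
  pose proof (abs_cos_le1 y). pose proof (abs_cos_le1 (INR n * y)).
  pose proof (Rabs_pos (sin (INR n * y))). pose proof (Rabs_pos (sin y)). nra. Qed.

Lemma sin_half_bound n x : Rabs (sin (INR n * x)) <= 2 * INR n * Rabs (sin (x/2)).
Proof. replace (INR n * x) with (INR (2 * n) * (x/2)).
  eapply Rle_trans. apply sin_mul_bound. rewrite mult_INR; simpl; lra.
  rewrite mult_INR; simpl; field. Qed.

Lemma sin_tel r0 K x : 2 * sin (x/2) * sm (fun i => sin (INR (r0 + i) * x)) K =
  cos ((INR r0 - /2) * x) - cos ((INR (r0 + K) - /2) * x).
Proof. induction K; simpl sm. rewrite Nat.add_0_r; ring.
  rewrite Rmult_plus_distr_l, IHK. rewrite Nat.add_succ_r, S_INR.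
  replace ((INR (r0 + K) - / 2) * x) with (INR (r0+K) * x - x/2) by field.
  replace ((INR (r0 + K) + 1 - / 2) * x) with (INR (r0+K) * x + x/2) by field.
  rewrite cos_minus, cos_plus. ring. Qed.

Lemma sin_sum_bound r0 K x : sin (x/2) <> 0 ->
  Rabs (sm (fun i => sin (INR (r0 + i) * x)) K) <= / Rabs (sin (x/2)).
Proof. intros H. pose proof (sin_tel r0 K x).
  assert (Rabs (2 * sin (x / 2) * sm (fun i : nat => sin (INR (r0 + i) * x)) K) <= 2).
  { rewrite H0. eapply Rle_trans. apply Rabs_triang. rewrite Rabs_Ropp.
    pose proof (abs_cos_le1 ((INR r0 - / 2) * x)). pose proof (abs_cos_le1 ((INR (r0 + K) - / 2) * x)). lra. }
  rewrite !Rabs_mult in H1. rewrite Rabs_right in H1 by lra.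
  assert (0 < Rabs (sin (x/2))) by (apply Rabs_pos_lt; auto).
  apply (Rmult_le_reg_l (Rabs (sin (x/2)))); auto. rewrite Rinv_r by lra. lra. Qed.

Lemma abel (c g : nat -> R) K : sm (fun i => c i * g i) (S K) =
  c K * sm g (S K) + sm (fun i => (c i - c (S i)) * sm g (S i)) K.
Proof. induction K. simpl; ring. 
  change (sm (fun i => c i * g i) (S (S K))) with (sm (fun i => c i * g i) (S K) + c (S K) * g (S K)).
  rewrite IHK. change (sm g (S (S K))) with (sm g (S K) + g (S K)).
  change (sm (fun i : nat => (c i - c (S i)) * sm g (S i)) (S K)) with
    (sm (fun i : nat => (c i - c (S i)) * sm g (S i)) K + (c K - c (S K)) * sm g (S K)). ring. Qed.


Lemma INR_ge1 n : (1 <= n)%nat -> 1 <= INR n.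
Proof. intros. apply (le_INR 1 n) in H. simpl in H; lra. Qed.

Lemma bm_bound b N0 m D : (1 <= m)%nat -> 0 <= D ->
  (forall n, (m <= n)%nat -> INR n * b n <= D) -> block_max b m N0 <= D / INR m.
Proof. intros Hm HD H. assert (1 <= INR m) by (apply INR_ge1; auto).
  assert (forall n, (m <= n)%nat -> b n <= D / INR m).
  { intros n Hn. pose proof (H n Hn). assert (INR m <= INR n) by (apply le_INR; auto).
    apply (Rmult_le_reg_l (INR m)); [lra|]. replace (INR m * (D / INR m)) with D by (field; lra).
    destruct (Rle_lt_dec 0 (b n)). nra. nra. }
  apply bm_le. apply H1; lia. intros; apply H1; lia. Qed.

Lemma var_tail b N0 M (HM : 0 < M)
  (HC : forall m : nat, (1 <= m)%nat -> var_block b m <= M * block_max b m N0)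
  D m0 (HD : 0 <= D) (Hm0 : (1 <= m0)%nat) (Hnb : forall n, (m0 <= n)%nat -> INR n * b n <= D) :
  forall K m, (m0 <= m)%nat -> sm (fun i => Rabs (b (m+i)%nat - b (S (m+i)))) K <= 2*M*D/INR m.
Proof.
  intros K. induction K as [K IH] using (well_founded_induction Wf_nat.lt_wf). intros m Hm.
  assert (1 <= INR m) by (apply INR_ge1; lia).
  assert (Hbm : M * block_max b m N0 <= M * D / INR m).
  { pose proof (bm_bound b N0 m D ltac:(lia) HD ltac:(intros; apply Hnb; lia)).
    unfold Rdiv in *. rewrite Rmult_assoc. apply Rmult_le_compat_l; lra. }
  assert (0 <= M * D / INR m) by (apply Rmult_le_pos; [nra| apply Rlt_le, Rinv_0_lt_compat; lra]).
  destruct (Compare_dec.le_lt_dec K (S m)).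
  - eapply Rle_trans. apply sm_mono. intros; apply Rabs_pos. exact l.
    rewrite <- var_block_sm. eapply Rle_trans. apply HC; lia. 
    replace (2 * M * D / INR m) with (2 * (M * D / INR m)) by (field; lra). lra.
  - replace K with (S m + (K - S m))%nat by lia. rewrite sm_add.
    rewrite (sm_ext _ (fun i => Rabs (b ((m + S m) + i)%nat - b (S ((m + S m) + i)))) (K - S m))
      by (intros; cbv beta; rewrite !Nat.add_assoc; auto).
    pose proof (IH (K - S m)%nat ltac:(lia) (m + S m)%nat ltac:(lia)).
    rewrite <- var_block_sm. pose proof (HC m ltac:(lia)).
    assert (INR (m + S m) = 2 * INR m + 1) by (rewrite plus_INR, S_INR; ring).
    rewrite H3 in H1.
    assert (2 * M * D / (2 * INR m + 1) <= M * D / INR m).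
    { apply (Rmult_le_reg_r ((2 * INR m + 1) * INR m)). nra.
      replace (2 * M * D / (2 * INR m + 1) * ((2 * INR m + 1) * INR m)) with (2 * M * D * INR m) by (field; lra).
      replace (M * D / INR m * ((2 * INR m + 1) * INR m)) with (M * D * (2 * INR m + 1)) by (field; lra).
      assert (0 <= M * D) by nra. nra. }
    replace (2 * M * D / INR m) with (2 * (M * D / INR m)) by (field; lra). lra.
Qed.

Lemma J_exists p s K : exists J, (J <= K)%nat /\ (J = O \/ INR (p + J) * s <= 1) /\
  (J = K \/ 1 < INR (S (p + J)) * s).
Proof. induction K.
  - exists O; split; [lia|]; split; auto.
  - destruct IHK as [J [H1 [H2 H3]]]. destruct H3 as [H3|H3].
    + subst J. destruct (Rle_lt_dec (INR (S (p + K)) * s) 1).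
      * exists (S K). split; [lia|]. split; [right; rewrite Nat.add_succ_r; auto| left; auto].
      * exists K. split; [lia|]. split; auto.
    + exists J. split; [lia|]. split; auto.
Qed.

Lemma unifA b N0 M (Hb : forall n : nat, (1 <= n)%nat -> 0 <= b n) (HM : 0 < M)
  (HC : forall m : nat, (1 <= m)%nat -> var_block b m <= M * block_max b m N0)
  (Hcv : Un_cv (fun n => INR n * b n) 0) :
  forall d, 0 < d -> exists N, (1 <= N)%nat /\ forall p K x, (N <= p)%nat ->
    Rabs (sin_psum b (p + K) x - sin_psum b p x) <= d.
Proof.
  intros d Hd. set (D := d / (3 + 2 * M)).
  assert (HD : 0 < D) by (unfold D; apply Rdiv_lt_0_compat; lra).
  destruct (Hcv D HD) as [N1 HN1].
  exists (max 1 N1). split; [lia|]. intros p K x Hp.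
  assert (Hnb : forall n, (max 1 N1 <= n)%nat -> INR n * b n <= D).
  { intros n Hn. pose proof (HN1 n ltac:(lia)). unfold R_dist in H. rewrite Rminus_0_r in H.
    apply Rabs_def2 in H. lra. }
  rewrite !sin_psum_sm, sm_add, Rplus_comm. unfold Rminus. rewrite Rplus_assoc, Rplus_opp_r, Rplus_0_r.
  set (term := fun i => b (S (p + i)) * sin (INR (S (p + i)) * x)).
  change (Rabs (sm term K) <= d).
  assert (Hterm : forall n, (max 1 N1 <= n)%nat -> Rabs (b n * sin (INR n * x)) <= 2 * Rabs (sin (x/2)) * D).
  { intros n Hn. rewrite Rabs_mult. rewrite (Rabs_right (b n)) by (apply Rle_ge, Hb; lia).
    pose proof (sin_half_bound n x). pose proof (Hnb n Hn). pose proof (Hb n ltac:(lia)).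
    pose proof (Rabs_pos (sin (x/2))).
    apply Rle_trans with (b n * (2 * INR n * Rabs (sin (x / 2)))). apply Rmult_le_compat_l; auto.
    nra. }
  destruct (Req_dec (sin (x/2)) 0) as [Hs0|Hs0].
  { rewrite (sm_ext _ (fun _ => 0)). rewrite sm_const; rewrite Rmult_0_r, Rabs_R0; lra.
    intros i Hi. unfold term. pose proof (Hterm (S (p+i)) ltac:(lia)). rewrite Hs0, Rabs_R0 in H.
    assert (Rabs (b (S (p + i)) * sin (INR (S (p + i)) * x)) = 0) by (pose proof (Rabs_pos (b (S (p + i)) * sin (INR (S (p + i)) * x))); lra).
    destruct (Req_dec (b (S (p + i)) * sin (INR (S (p + i)) * x)) 0) as [E|E]; auto.
    apply Rabs_pos_lt in E. lra. }
  set (s := Rabs (sin (x/2))).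
  assert (Hs : 0 < s) by (apply Rabs_pos_lt; auto).
  destruct (J_exists p s K) as [J [HJ1 [HJ2 HJ3]]].
  replace K with (J + (K - J))%nat by lia. rewrite sm_add.
  assert (P1 : Rabs (sm term J) <= 2 * D).
  { eapply Rle_trans. apply sm_abs. eapply Rle_trans. apply (sm_le _ (fun _ => 2 * s * D)).
    intros i Hi. unfold term. apply Hterm. lia. rewrite sm_const.
    assert (INR J * s <= 1).
    { destruct HJ2 as [HJ2|HJ2]. subst J; simpl; lra. 
      assert (INR J <= INR (p+J)) by (apply le_INR; lia). nra. }
    nra. }
  assert (P2 : Rabs (sm (fun i => term (J + i)%nat) (K - J)) <= (1 + 2 * M) * D).
  { destruct (K - J)%nat as [|K2] eqn:EK.
    { simpl. rewrite Rabs_R0. nra. }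
    destruct HJ3 as [HJ3|HJ3]; [lia|].
    set (r0 := S (p + J)) in *.
    assert (Hr0 : (max 1 N1 <= r0)%nat) by (unfold r0; lia).
    set (c := fun i => b (r0 + i)%nat). set (g := fun i => sin (INR (r0 + i) * x)).
    rewrite (sm_ext _ (fun i => c i * g i)).
    2:{ intros i Hi. unfold term, c, g, r0. replace (S (p + (J + i))) with (S (p + J) + i)%nat by lia. auto. }
    rewrite abel.
    assert (HE : forall k, Rabs (sm g k) <= / s).
    { intros k. unfold g. apply sin_sum_bound; auto. }
    assert (Hvar : sm (fun i => Rabs (c i - c (S i))) K2 <= 2 * M * D / INR r0).
    { unfold c. rewrite (sm_ext _ (fun i => Rabs (b (r0 + i)%nat - b (S (r0 + i))))).
      apply (var_tail b N0 M HM HC D (max 1 N1)); auto; try lra; try lia.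
      intros i Hi. rewrite Nat.add_succ_r. auto. }
    assert (Hc : c K2 <= D / INR r0).
    { unfold c. pose proof (Hnb (r0 + K2)%nat ltac:(lia)).
      assert (1 <= INR r0) by (apply INR_ge1; lia).
      assert (INR r0 <= INR (r0 + K2)) by (apply le_INR; lia).
      pose proof (Hb (r0 + K2)%nat ltac:(lia)).
      apply (Rmult_le_reg_l (INR r0)); [lra|]. replace (INR r0 * (D / INR r0)) with D by (field; lra). nra. }
    assert (Hc0 : 0 <= c K2) by (unfold c; apply Hb; lia).
    eapply Rle_trans. apply Rabs_triang. rewrite Rabs_mult, (Rabs_right (c K2)) by lra.
    eapply Rle_trans. apply Rplus_le_compat. apply Rmult_le_compat_l. lra. apply HE.
    eapply Rle_trans. apply sm_abs. apply (sm_le _ (fun i => Rabs (c i - c (S i)) * / s)).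
    intros i Hi. rewrite Rabs_mult. apply Rmult_le_compat_l. apply Rabs_pos. apply HE.
    rewrite (sm_ext _ (fun i => / s * Rabs (c i - c (S i)))) by (intros; ring).
    rewrite sm_scal.
    assert (1 <= INR r0) by (apply INR_ge1; lia).
    assert (Hq : / s <= INR r0).
    { apply (Rmult_le_reg_l s); auto. rewrite Rinv_r by lra. rewrite Rmult_comm; lra. }
    assert (c K2 * / s + / s * sm (fun i => Rabs (c i - c (S i))) K2 <= / s * ((1 + 2 * M) * D / INR r0)).
    { replace ((1 + 2 * M) * D / INR r0) with (D / INR r0 + 2 * M * D / INR r0) by (field; lra).
      assert (0 < / s) by (apply Rinv_0_lt_compat; auto). nra. }
    eapply Rle_trans. apply H0.
    replace (/ s * ((1 + 2 * M) * D / INR r0)) with ((/ s / INR r0) * ((1 + 2 * M) * D)) by (field; lra).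
    assert (/ s / INR r0 <= 1). { apply (Rmult_le_reg_r (INR r0)); [lra|]. 
      replace (/ s / INR r0 * INR r0) with (/ s) by (field; lra). lra. }
    assert (0 <= (1 + 2 * M) * D) by nra. 
    assert (0 <= / s / INR r0). { apply Rmult_le_pos; apply Rlt_le, Rinv_0_lt_compat; lra. }
    nra. }
  eapply Rle_trans. apply Rabs_triang.
  replace d with ((3 + 2 * M) * D) by (unfold D; field; lra). lra.
Qed.


Lemma cv_le_bound u l N c e : Un_cv u l -> (forall n, (N <= n)%nat -> Rabs (u n - c) <= e) -> Rabs (l - c) <= e.
Proof. intros Hu H. destruct (Rle_lt_dec (Rabs (l - c)) e) as [h|h]; auto. exfalso.
  destruct (Hu (Rabs (l - c) - e)) as [N' HN']; [lra|].
  pose proof (HN' (max N N') ltac:(lia)). pose proof (H (max N N') ltac:(lia)). unfold R_dist in H0.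
  assert (Rabs (l - c) <= Rabs (u (max N N') - c) + Rabs (u (max N N') - l)).
  { replace (l - c) with ((u (max N N') - c) - (u (max N N') - l)) by ring.
    eapply Rle_trans. apply Rabs_triang. rewrite Rabs_Ropp. lra. }
  lra. Qed.

Lemma cv_le_bound_sym u l N c e : Un_cv u l -> (forall n, (N <= n)%nat -> Rabs (u n - c) <= e) -> Rabs (c - l) <= e.
Proof. intros. rewrite Rabs_minus_sym. eapply cv_le_bound; eauto. Qed.

Lemma cv_le u l N e : Un_cv u l -> (forall n, (N <= n)%nat -> u n <= e) -> l <= e.
Proof. intros Hu H. destruct (Rle_lt_dec l e) as [h|h]; auto. exfalso.
  destruct (Hu (l - e)) as [N' HN']; [lra|].
  pose proof (HN' (max N N') ltac:(lia)). pose proof (H (max N N') ltac:(lia)). unfold R_dist in H0.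
  apply Rabs_def2 in H0. lra. Qed.

Lemma cv_ge u l N e : Un_cv u l -> (forall n, (N <= n)%nat -> e <= u n) -> e <= l.
Proof. intros Hu H. destruct (Rle_lt_dec e l) as [h|h]; auto. exfalso.
  destruct (Hu (e - l)) as [N' HN']; [lra|].
  pose proof (HN' (max N N') ltac:(lia)). pose proof (H (max N N') ltac:(lia)). unfold R_dist in H0.
  apply Rabs_def2 in H0. lra. Qed.

Lemma unif_to_i b : (forall d, 0 < d -> exists N, (1 <= N)%nat /\ forall p K x, (N <= p)%nat ->
    Rabs (sin_psum b (p + K) x - sin_psum b p x) <= d) -> sin_series_unif_conv b.
Proof. intros H.
  assert (Hc : forall x, Cauchy_crit (fun N => sin_psum b N x)).
  { intros x e He. destruct (H (e/3)) as [N [_ HN]]; [lra|]. exists N. intros n m Hn Hm. unfold R_dist.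
    pose proof (HN N (n - N)%nat x ltac:(lia)). pose proof (HN N (m - N)%nat x ltac:(lia)).
    replace (N + (n - N))%nat with n in H0 by lia. replace (N + (m - N))%nat with m in H1 by lia.
    replace (sin_psum b n x - sin_psum b m x) with ((sin_psum b n x - sin_psum b N x) - (sin_psum b m x - sin_psum b N x)) by ring.
    eapply Rle_lt_trans. apply Rabs_triang. rewrite Rabs_Ropp. lra. }
  exists (fun x => proj1_sig (R_complete _ (Hc x))). intros e He.
  destruct (H (e/2)) as [N [_ HN]]; [lra|]. exists N. intros n Hn x.
  destruct (R_complete _ (Hc x)) as [l Hl]. simpl.
  assert (Rabs (l - sin_psum b n x) <= e/2).
  { apply (cv_le_bound (fun N => sin_psum b N x) _ n). auto. intros m Hm. pose proof (HN n (m - n)%nat x Hn).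
    replace (n + (m - n))%nat with m in H0 by lia. auto. }
  rewrite Rabs_minus_sym. lra. Qed.

Lemma cont_sin_term c a : continuity (fun x => c * sin (a * x)).
Proof. intros x. apply continuity_pt_scal. apply (continuity_pt_comp (fun x => a * x) sin).
  apply continuity_pt_scal. apply derivable_continuous_pt, derivable_pt_id. apply continuity_sin. Qed.

Lemma cont_psum b N : continuity (sin_psum b N).
Proof. induction N; intros x; simpl.
  - apply continuity_pt_const. intros u v; auto.
  - apply (continuity_pt_plus (sin_psum b N) (fun x => b (S N) * sin (match N with 0%nat => 1 | S _ => INR N + 1 end * x))).
    apply IHN. apply cont_sin_term. Qed.

Lemma i_to_ii b : sin_series_unif_conv b -> sin_series_conv_cont b.
Proof. intros [f Hf]. exists f. split.
  - intros x e He. destruct (Hf e He) as [N HN]. exists N. intros n Hn. unfold R_dist. apply HN; lia.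
  - intros x. unfold continuity_pt, continue_in, limit1_in, limit_in. intros e He. simpl.
    destruct (Hf (e/3)) as [N HN]; [lra|].
    destruct (cont_psum b N x (e/3)) as [a [Ha Ha2]]; [lra|]. exists a. split; auto.
    intros y [Hd Hy]. pose proof (Ha2 y (conj Hd Hy)). simpl in H. unfold R_dist in *.
    pose proof (HN N (le_n _) x). pose proof (HN N (le_n _) y).
    replace (f y - f x) with ((sin_psum b N y - sin_psum b N x) - (sin_psum b N y - f y) + (sin_psum b N x - f x)) by ring.
    eapply Rle_lt_trans. apply Rabs_triang. eapply Rle_lt_trans. apply Rplus_le_compat_r. apply Rabs_triang.
    rewrite Rabs_Ropp. lra. Qed.


Lemma abs_le_inv a c : Rabs a <= c -> - c <= a <= c.
Proof. intros. pose proof (Rle_abs a). pose proof (Rle_abs (-a)). rewrite Rabs_Ropp in H1. lra. Qed.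

Lemma window b N0 M (HM : 0 < M)
  (HC : forall m : nat, (1 <= m)%nat -> var_block b m <= M * block_max b m N0) j m :
  (1 <= m)%nat -> (m <= j <= 2 * m + 1)%nat -> b j <= (1 + M) * block_max b m N0.
Proof. intros Hm Hj. pose proof (tel b m (j - m)). replace (m + (j - m))%nat with j in H by lia.
  assert (Rabs (b j - b m) <= M * block_max b m N0).
  { rewrite H. eapply Rle_trans. apply sm_abs. eapply Rle_trans. apply sm_mono with (K' := S m).
    intros; apply Rabs_pos. lia. rewrite (sm_ext _ (fun i => Rabs (b (m + i)%nat - b (S (m + i))))).
    rewrite <- var_block_sm. apply HC; auto. intros; apply Rabs_minus_sym. }
  pose proof (bm_ge b m N0). apply abs_le_inv in H0. lra. Qed.

Lemma window_p b N0 M (HN0 : (1 <= N0)%nat) (HM : 0 < M)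
  (HC : forall m : nat, (1 <= m)%nat -> var_block b m <= M * block_max b m N0) j m :
  (1 <= m)%nat -> (m <= j <= 2 * m + 1)%nat -> exists p, (m <= p < m + N0)%nat /\ b j <= (1 + M) * b p.
Proof. intros. destruct (bm_ex b m N0 HN0) as [p [Hp E]]. exists p. split; auto.
  rewrite <- E. eapply window; eauto. Qed.

Lemma fin_bound (b : nat -> R) K : exists B, forall n, (n < K)%nat -> b n <= B.
Proof. induction K. exists 0; intros; lia. destruct IHK as [B HB]. exists (Rmax B (b K)).
  intros n Hn. destruct (Nat.eq_dec n K). subst; apply Rmax_r. eapply Rle_trans; [apply HB; lia| apply Rmax_l]. Qed.

Lemma sin_nonzero N0 r : (1 <= r < 2 * N0 + 1)%nat -> sin (INR r * (2 * PI / INR (2 * N0 + 1))) <> 0.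
Proof. intros Hr E. apply sin_eq_0_0 in E. destruct E as [k Hk].
  assert (HL : 0 < INR (2 * N0 + 1)) by (apply lt_0_INR; lia). pose proof PI_RGT_0.
  assert (2 * INR r = IZR k * INR (2 * N0 + 1)).
  { apply (Rmult_eq_reg_r (PI / INR (2 * N0 + 1))). 
    replace (2 * INR r * (PI / INR (2 * N0 + 1))) with (INR r * (2 * PI / INR (2 * N0 + 1))) by (field; lra).
    rewrite Hk. field; lra. apply Rgt_not_eq. apply Rdiv_lt_0_compat; lra. }
  rewrite !INR_IZR_INZ in H0. rewrite <- mult_IZR in H0. replace 2 with (IZR 2) in H0 by auto.
  rewrite <- mult_IZR in H0. apply eq_IZR in H0. rewrite Nat2Z.inj_add, Nat2Z.inj_mul in H0. change (Z.of_nat 2) with 2%Z in H0. change (Z.of_nat 1) with 1%Z in H0.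
  assert (1 <= Z.of_nat r < 2 * Z.of_nat N0 + 1)%Z by lia.
  assert (0 < k)%Z. { destruct (Z.le_gt_cases k 0); [|lia]. assert (k * (2 * Z.of_nat N0 + 1) <= 0)%Z by (apply Z.mul_nonpos_nonneg; lia). lia. }
  assert (k < 2)%Z. { destruct (Z.le_gt_cases 2 k); [|lia]. assert (2 * (2 * Z.of_nat N0 + 1) <= k * (2 * Z.of_nat N0 + 1))%Z by (apply Z.mul_le_mono_nonneg_r; lia). lia. } assert (k = 1)%Z by lia. subst k. lia. Qed.

Lemma sin_fin_min N0 : exists c, 0 < c /\ forall r, (1 <= r < 2 * N0 + 1)%nat ->
  c <= Rabs (sin (INR r * (2 * PI / INR (2 * N0 + 1)))).
Proof.
  assert (forall K, exists c, 0 < c /\ forall r, (1 <= r <= K)%nat -> (r < 2 * N0 + 1)%nat ->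
    c <= Rabs (sin (INR r * (2 * PI / INR (2 * N0 + 1))))).
  { induction K. exists 1; split; [lra|]; intros; lia.
    destruct IHK as [c [Hc H]]. destruct (Compare_dec.lt_dec (S K) (2 * N0 + 1)).
    - exists (Rmin c (Rabs (sin (INR (S K) * (2 * PI / INR (2 * N0 + 1)))))). split.
      apply Rmin_pos; auto. apply Rabs_pos_lt. apply sin_nonzero; lia.
      intros r Hr1 Hr2. destruct (Nat.eq_dec r (S K)). subst; apply Rmin_r.
      eapply Rle_trans. apply Rmin_l. apply H; lia.
    - exists c. split; auto. intros; apply H; lia. }
  destruct (H (2 * N0)%nat) as [c [Hc H1]]. exists c. split; auto. intros; apply H1; lia. Qed.

Lemma sin_mod_bound N0 : exists c, 0 < c /\ forall p, (p mod (2 * N0 + 1) <> 0)%nat ->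
  c <= Rabs (sin (INR p * (2 * PI / INR (2 * N0 + 1)))).
Proof. destruct (sin_fin_min N0) as [c [Hc H]]. exists c; split; auto. intros p Hp.
  set (L := (2 * N0 + 1)%nat) in *.
  pose proof (Nat.div_mod p L ltac:(unfold L; lia)). pose proof (Nat.mod_upper_bound p L ltac:(unfold L; lia)).
  set (q := (p / L)%nat) in *. set (r := (p mod L)%nat) in *. clearbody q r.
  assert (INR p * (2 * PI / INR L) = INR r * (2 * PI / INR L) + 2 * INR q * PI).
  { assert (INR p = INR L * INR q + INR r) by (rewrite H0 at 1; rewrite plus_INR, mult_INR; auto).
    rewrite H2. field. apply not_0_INR. unfold L; lia. }
  rewrite H2, sin_period. apply H. unfold L in *; lia. Qed.

Lemma b_bounded b N0 M (Hb : forall n : nat, (1 <= n)%nat -> 0 <= b n) (HN0 : (1 <= N0)%nat) (HM : 0 < M)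
  (HC : forall m : nat, (1 <= m)%nat -> var_block b m <= M * block_max b m N0)
  (Hx : forall x, exists l, Un_cv (fun N => sin_psum b N x) l) :
  exists B, 0 < B /\ forall n, b n <= B.
Proof.
  set (L := (2 * N0 + 1)%nat). set (x0 := 2 * PI / INR L).
  destruct (Hx x0) as [l Hl]. destruct (Hl (1/2)) as [N1 HN1]; [lra|].
  assert (Ha : forall n, (N1 <= n)%nat -> Rabs (b (S n) * sin (INR (S n) * x0)) <= 1).
  { intros n Hn. pose proof (HN1 n Hn). pose proof (HN1 (S n) ltac:(lia)). unfold R_dist in *.
    replace (b (S n) * sin (INR (S n) * x0)) with ((sin_psum b (S n) x0 - l) - (sin_psum b n x0 - l))
      by (change (sin_psum b (S n) x0) with (sin_psum b n x0 + b (S n) * sin (INR (S n) * x0)); ring).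
    eapply Rle_trans. apply Rabs_triang. rewrite Rabs_Ropp. lra. }
  destruct (sin_mod_bound N0) as [c [Hc Hcb]].
  destruct (fin_bound b (N1 + 2 * N0 + 2)) as [B0 HB0].
  exists (Rmax 1 (Rmax B0 ((1 + M) / c))). split. eapply Rlt_le_trans; [|apply Rmax_l]; lra.
  intros j. destruct (Compare_dec.lt_dec j (N1 + 2 * N0 + 2)).
  { eapply Rle_trans. apply HB0; auto. eapply Rle_trans; [|apply Rmax_r]. apply Rmax_l. }
  eapply Rle_trans; [|apply Rmax_r]. eapply Rle_trans; [|apply Rmax_r].
  destruct (window_p b N0 M HN0 HM HC j j ltac:(lia) ltac:(lia)) as [p1 [Hp1 Hbp1]].
  destruct (window_p b N0 M HN0 HM HC j (j - N0) ltac:(lia) ltac:(lia)) as [p2 [Hp2 Hbp2]].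
  assert (exists p, (N1 < p)%nat /\ b j <= (1 + M) * b p /\ (p mod L <> 0)%nat) as [p [Hp [Hbp Hpm]]].
  { destruct (Nat.eq_dec (p1 mod L) 0) as [E1|E1]; [|exists p1; split; [lia|auto]].
    destruct (Nat.eq_dec (p2 mod L) 0) as [E2|E2]; [|exists p2; split; [lia|auto]].
    exfalso. pose proof (Nat.div_mod p1 L ltac:(unfold L; lia)). pose proof (Nat.div_mod p2 L ltac:(unfold L; lia)).
    rewrite E1 in H. rewrite E2 in H0. set (q1 := (p1 / L)%nat) in *. set (q2 := (p2 / L)%nat) in *. clearbody q1 q2.
    destruct (Compare_dec.le_lt_dec q1 q2) as [h|h].
    + assert (L * q1 <= L * q2)%nat by (apply Nat.mul_le_mono_l; auto). lia.
    + assert (L * S q2 <= L * q1)%nat by (apply Nat.mul_le_mono_l; auto). rewrite Nat.mul_succ_r in H1. unfold L in *. lia. }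
  pose proof (Ha (p - 1)%nat ltac:(lia)). replace (S (p - 1)) with p in H by lia.
  pose proof (Hcb p Hpm). fold L x0 in H0. rewrite Rabs_mult in H. rewrite (Rabs_right (b p)) in H by (apply Rle_ge, Hb; lia).
  pose proof (Hb p ltac:(lia)).
  assert (b p <= 1 / c). { apply (Rmult_le_reg_r c); auto. replace (1 / c * c) with 1 by (field; lra). nra. }
  replace ((1 + M) / c) with ((1 + M) * (1 / c)) by (field; lra).
  eapply Rle_trans. apply Hbp. apply Rmult_le_compat_l; lra.
Qed.


Lemma arch C e : 0 < e -> exists N, (1 <= N)%nat /\ forall n, (N <= n)%nat -> C / INR n < e.
Proof. intros He. destruct (Rle_lt_dec C 0).
  - exists 1%nat. split; auto. intros n Hn. assert (0 < INR n) by (apply lt_0_INR; lia).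
    assert (0 < / INR n) by (apply Rinv_0_lt_compat; auto). unfold Rdiv. nra.
  - destruct (archimed (C / e)) as [H1 _]. set (z := up (C / e)) in *.
    assert (0 < C / e) by (apply Rdiv_lt_0_compat; auto).
    assert (0 < z)%Z by (apply lt_IZR; simpl; lra).
    exists (max 1 (Z.to_nat z)). split; [lia|]. intros n Hn.
    assert (INR (Z.to_nat z) = IZR z) by (rewrite INR_IZR_INZ, Z2Nat.id; auto; lia).
    assert (INR (Z.to_nat z) <= INR n) by (apply le_INR; lia).
    assert (0 < INR n) by (apply lt_0_INR; lia).
    apply (Rmult_lt_reg_r (INR n)); auto. replace (C / INR n * INR n) with C by (field; lra).
    assert (C / e < INR n) by lra. apply (Rmult_lt_reg_r (/ e)). apply Rinv_0_lt_compat; auto.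
    replace (e * INR n * / e) with (INR n) by (field; lra). unfold Rdiv in H5. lra. Qed.

Lemma le_lim X Y C N0 : (forall N, (N0 <= N)%nat -> X <= Y + C / INR N) -> X <= Y.
Proof. intros H. destruct (Rle_lt_dec X Y); auto. destruct (arch C (X - Y)) as [N [HN1 HN2]]; [lra|].
  pose proof (H (max N N0) ltac:(lia)). pose proof (HN2 (max N N0) ltac:(lia)). lra. Qed.

Lemma inv_sq_sum N K : (1 <= N)%nat -> sm (fun i => / (INR (S (N + i)))^2) K <= / INR N - / INR (N + K).
Proof. intros HN. induction K. simpl sm. rewrite Nat.add_0_r; lra.
  change (sm (fun i => / (INR (S (N + i)))^2) (S K)) with (sm (fun i => / (INR (S (N + i)))^2) K + / (INR (S (N + K)))^2).
  assert (1 <= INR (N + K)) by (apply INR_ge1; lia).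
  rewrite Nat.add_succ_r, S_INR.
  assert (/ (INR (N + K) + 1) ^ 2 <= / INR (N + K) - / (INR (N + K) + 1)).
  { replace (/ INR (N + K) - / (INR (N + K) + 1)) with (/ (INR (N + K) * (INR (N + K) + 1))) by (field; lra).
    apply Rinv_le_contravar. nra. nra. }
  lra. Qed.

Lemma limit_func (u : R -> nat -> R) C : 0 <= C ->
  (forall x N K, (1 <= N)%nat -> Rabs (u x (N + K)%nat - u x N) <= C / INR N) ->
  exists F, forall x N, (1 <= N)%nat -> Rabs (F x - u x N) <= C / INR N.
Proof. intros HC H.
  assert (Hc : forall x, Cauchy_crit (u x)).
  { intros x e He. destruct (arch C (e/2)) as [N [HN1 HN2]]; [lra|]. exists N. intros n m Hn Hm. unfold R_dist.
    pose proof (H x N (n - N)%nat HN1). pose proof (H x N (m - N)%nat HN1).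
    replace (N + (n - N))%nat with n in H0 by lia. replace (N + (m - N))%nat with m in H1 by lia.
    pose proof (HN2 N (le_n _)).
    replace (u x n - u x m) with ((u x n - u x N) - (u x m - u x N)) by ring.
    eapply Rle_lt_trans. apply Rabs_triang. rewrite Rabs_Ropp. lra. }
  exists (fun x => proj1_sig (R_complete _ (Hc x))). intros x N HN.
  destruct (R_complete _ (Hc x)) as [l Hl]. simpl.
  apply (cv_le_bound (u x) l N). auto. intros n Hn. pose proof (H x N (n - N)%nat HN).
  replace (N + (n - N))%nat with n in H0 by lia. auto. Qed.

Definition Psum (b : nat -> R) N x := sin_psum (fun n => b n / INR n ^ 2) N x.

Lemma P_tail b B : (forall n, (1 <= n)%nat -> 0 <= b n <= B) ->
  forall x N K, (1 <= N)%nat -> Rabs (Psum b (N + K) x - Psum b N x) <= B / INR N.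
Proof. intros Hb x N K HN. unfold Psum. rewrite !sin_psum_sm, sm_add.
  replace (sm (fun i : nat => b (S i) / INR (S i) ^ 2 * sin (INR (S i) * x)) N +
   sm (fun i : nat => b (S (N + i)) / INR (S (N + i)) ^ 2 * sin (INR (S (N + i)) * x)) K -
   sm (fun i : nat => b (S i) / INR (S i) ^ 2 * sin (INR (S i) * x)) N) with
   (sm (fun i : nat => b (S (N + i)) / INR (S (N + i)) ^ 2 * sin (INR (S (N + i)) * x)) K) by ring.
  eapply Rle_trans. apply sm_abs. eapply Rle_trans. apply (sm_le _ (fun i => B * / (INR (S (N + i)))^2)).
  { intros i Hi. pose proof (Hb (S (N + i)) ltac:(lia)). assert (0 < INR (S (N + i))) by (apply lt_0_INR; lia).
    rewrite Rabs_mult. unfold Rdiv. rewrite Rabs_mult. rewrite (Rabs_right (b _)) by lra.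
    rewrite Rabs_right. 2:{ apply Rle_ge, Rlt_le, Rinv_0_lt_compat. apply pow_lt; auto. }
    pose proof (abs_sin_le1 (INR (S (N + i)) * x)). assert (0 < / INR (S (N + i)) ^ 2) by (apply Rinv_0_lt_compat, pow_lt; auto).
    replace (B * / INR (S (N + i)) ^ 2) with (B * / INR (S (N + i)) ^ 2 * 1) by ring.
    apply Rmult_le_compat; try apply Rabs_pos; try nra. }
  rewrite sm_scal. pose proof (inv_sq_sum N K HN).
  assert (0 < / INR (N + K)) by (apply Rinv_0_lt_compat, lt_0_INR; lia).
  assert (0 <= B) by (pose proof (Hb 1%nat (le_n _)); lra).
  unfold Rdiv. nra. Qed.

Lemma psum_zero b N : sin_psum b N 0 = 0.
Proof. induction N; auto. change (sin_psum b (S N) 0) with (sin_psum b N 0 + b (S N) * sin (INR (S N) * 0)).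
  rewrite IHN, Rmult_0_r, sin_0; ring. Qed.

Lemma P_zero b N : Psum b N 0 = 0.
Proof. apply psum_zero. Qed.

Lemma F_exists b B : (forall n, (1 <= n)%nat -> 0 <= b n <= B) ->
  exists F, (forall x N, (1 <= N)%nat -> Rabs (F x - Psum b N x) <= B / INR N) /\ continuity F /\ F 0 = 0.
Proof. intros Hb. assert (0 <= B) by (pose proof (Hb 1%nat (le_n _)); lra).
  destruct (limit_func (fun x N => Psum b N x) B H) as [F HF].
  { intros; apply P_tail; auto. }
  exists F. split; auto. split.
  - intros x. unfold continuity_pt, continue_in, limit1_in, limit_in. intros e He. simpl.
    destruct (arch B (e/3)) as [N [HN1 HN2]]; [lra|]. pose proof (HN2 N (le_n _)).
    destruct (cont_psum (fun n => b n / INR n ^ 2) N x (e/3)) as [a [Ha Ha2]]; [lra|]. exists a. split; auto.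
    intros y [Hd Hy]. pose proof (Ha2 y (conj Hd Hy)). change (Rabs (sin_psum (fun n => b n / INR n ^ 2) N y - sin_psum (fun n => b n / INR n ^ 2) N x) < e / 3) in H1. unfold R_dist in *.
    pose proof (HF x N HN1). pose proof (HF y N HN1). unfold Psum in *.
    replace (F y - F x) with ((sin_psum (fun n : nat => b n / INR n ^ 2) N y - sin_psum (fun n : nat => b n / INR n ^ 2) N x)
      + (F y - sin_psum (fun n : nat => b n / INR n ^ 2) N y) - (F x - sin_psum (fun n : nat => b n / INR n ^ 2) N x)) by ring.
    eapply Rle_lt_trans. apply Rabs_triang. eapply Rle_lt_trans. apply Rplus_le_compat_r. apply Rabs_triang.
    rewrite Rabs_Ropp. lra.
  - assert (forall N, (1 <= N)%nat -> Rabs (F 0) <= B / INR N).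
    { intros N HN. pose proof (HF 0 N HN). rewrite P_zero, Rminus_0_r in H0. auto. }
    assert (F 0 <= 0). { apply (le_lim _ _ B 1). intros N HN. pose proof (H0 N HN). apply abs_le_inv in H1. lra. }
    assert (- F 0 <= 0). { apply (le_lim _ _ B 1). intros N HN. pose proof (H0 N HN). apply abs_le_inv in H2. lra. }
    lra.
Qed.


Definition usq (t : R) (n : nat) := (sin (INR n * t) / (INR n * t)) ^ 2.
Definition Phi (s : R) := if Rle_dec s 1 then s ^ 2 else 2 - / s.

Lemma sinc_le1 s : 0 < s -> Rabs (sin s / s) <= 1.
Proof. intros. unfold Rdiv. rewrite Rabs_mult, Rabs_inv, (Rabs_right s) by lra.
  pose proof (abs_sin_le s). rewrite (Rabs_right s) in H0 by lra.
  apply (Rmult_le_reg_r s); auto. rewrite Rmult_assoc, Rinv_l by lra. lra. Qed.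

Lemma sinc_le_inv s : 0 < s -> Rabs (sin s / s) <= / s.
Proof. intros. unfold Rdiv. rewrite Rabs_mult, Rabs_inv, (Rabs_right s) by lra.
  pose proof (abs_sin_le1 s). assert (0 < / s) by (apply Rinv_0_lt_compat; auto). nra. Qed.

Lemma usq_bounds t n : 0 < t -> (1 <= n)%nat -> 0 <= usq t n <= 1.
Proof. intros. unfold usq. assert (0 < INR n * t) by (apply Rmult_lt_0_compat; auto; apply lt_0_INR; lia).
  pose proof (sinc_le1 _ H1). set (A := sin (INR n * t) / (INR n * t)) in *.
  apply abs_le_inv in H2. split. nra. nra. Qed.

Lemma one_minus_sinc2 s : 0 < s -> 1 - (sin s / s) ^ 2 <= s ^ 2 / 3.
Proof. intros. pose proof (sinc_le1 s H). apply abs_le_inv in H0.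
  destruct (Rle_lt_dec (s^2) 6).
  - assert (s <= 3) by nra. pose proof PI_gt3.
    pose proof (sin_lo s ltac:(lra) ltac:(lra)).
    assert (1 - s^2/6 <= sin s / s). { apply (Rmult_le_reg_r s); auto. unfold Rdiv. rewrite Rmult_assoc, Rinv_l by lra. nra. }
    assert (0 <= 1 - s^2/6) by nra. nra.
  - nra. Qed.

Lemma one_minus_usq t n : 0 < t -> (1 <= n)%nat -> 1 - usq t n <= (INR n * t) ^ 2 / 3.
Proof. intros. apply one_minus_sinc2. apply Rmult_lt_0_compat; auto; apply lt_0_INR; lia. Qed.

Lemma Phi_bounds s : 0 <= s -> 0 <= Phi s <= 2.
Proof. intros. unfold Phi. destruct (Rle_dec s 1). split; nra.
  assert (0 < / s < 1). { split. apply Rinv_0_lt_compat; lra. rewrite <- Rinv_1. apply Rinv_lt_contravar; lra. } lra. Qed.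

Lemma du_gen s t : 0 < t <= 1 -> t <= s ->
  Rabs ((sin s / s) ^ 2 - (sin (s + t) / (s + t)) ^ 2) <= 6 * (Phi (s + t) - Phi s).
Proof. intros [Ht0 Ht1] Hts. assert (Hs : 0 < s) by lra.
  set (A := sin s / s). set (A' := sin (s + t) / (s + t)).
  set (num := s * sin (s + t) - (s + t) * sin s).
  set (R1 := sin s * (cos t - 1) + cos s * (sin t - t)).
  assert (Hnum : num = s * R1 + t * (s * cos s - sin s)). { unfold num, R1. rewrite sin_plus. ring. }
  assert (HAA : A' - A = num * / (s * (s + t))). { unfold A, A', num. field. lra. }
  assert (Hd : Rabs (A ^ 2 - A' ^ 2) = Rabs (A' - A) * Rabs (A + A')).
  { rewrite <- Rabs_mult. replace ((A' - A) * (A + A')) with (- (A ^ 2 - A' ^ 2)) by ring. rewrite Rabs_Ropp; auto. }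
  assert (HAA2 : Rabs (A' - A) = Rabs num * / (s * (s + t))).
  { rewrite HAA, Rabs_mult, Rabs_inv, (Rabs_right (s * (s + t))) by nra. auto. }
  pose proof (cos_lo t ltac:(lra)). pose proof (COS_bound t).
  pose proof (sin_lo t ltac:(lra) ltac:(pose proof PI_gt3; lra)). pose proof (sin_le_id t ltac:(lra)).
  pose proof (abs_sin_le s). rewrite (Rabs_right s) in H3 by lra. apply abs_le_inv in H3.
  pose proof (abs_cos_le1 s). apply abs_le_inv in H4.
  assert (Hpos : 0 < / (s * (s + t))) by (apply Rinv_0_lt_compat; nra).
  rewrite Hd, HAA2.
  destruct (Rle_lt_dec s 1) as [hs|hs].
  -
    assert (HR1 : Rabs R1 <= s * t^2/2 + t^3/6).
    { unfold R1. eapply Rle_trans. apply Rabs_triang. rewrite !Rabs_mult.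
      assert (Rabs (cos t - 1) <= t^2/2) by (apply Rabs_le; lra).
      assert (Rabs (sin t - t) <= t^3/6) by (apply Rabs_le; lra).
      assert (Rabs (sin s) <= s) by (apply Rabs_le; lra).
      pose proof (abs_cos_le1 s). pose proof (Rabs_pos (sin s)). pose proof (Rabs_pos (cos t - 1)).
      pose proof (Rabs_pos (cos s)). pose proof (Rabs_pos (sin t - t)). nra. }
    assert (Hsc : Rabs (s * cos s - sin s) <= s^3/2).
    { pose proof (cos_lo s ltac:(lra)). pose proof (cos_hi s ltac:(lra)).
      pose proof (sin_lo s ltac:(lra) ltac:(pose proof PI_gt3; lra)).
      apply Rabs_le. split. nra.
      assert (s * cos s <= s * (1 - s ^ 2 / 2 + s ^ 4 / 24)) by (apply Rmult_le_compat_l; lra).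
      assert (s^5/24 <= s^3/3). { assert (s^2 <= 1) by nra. assert (0 <= s^3) by (apply pow_le; lra).
        replace (s^5) with (s^3 * s^2) by ring. nra. }
      assert (0 <= s^3) by (apply pow_le; lra). nra. }
    assert (Hn : Rabs num <= s * (s * t^2/2 + t^3/6 + t * s^2/2)).
    { rewrite Hnum. eapply Rle_trans. apply Rabs_triang. rewrite !Rabs_mult, (Rabs_right s), (Rabs_right t) by lra.
      assert (s * Rabs R1 <= s * (s * t^2/2 + t^3/6)) by (apply Rmult_le_compat_l; lra).
      assert (t * Rabs (s * cos s - sin s) <= t * (s^3/2)) by (apply Rmult_le_compat_l; lra). nra. }
    assert (HS : Rabs (A + A') <= 2).
    { eapply Rle_trans. apply Rabs_triang. unfold A, A'. pose proof (sinc_le1 s Hs). pose proof (sinc_le1 (s+t) ltac:(lra)). lra. }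
    assert (Rabs num * / (s * (s + t)) * Rabs (A + A') <= s * (s * t^2/2 + t^3/6 + t * s^2/2) * / (s * (s + t)) * 2).
    { apply Rmult_le_compat; try apply Rabs_pos. apply Rmult_le_pos; [apply Rabs_pos|lra].
      apply Rmult_le_compat_r; lra. auto. }
    eapply Rle_trans. apply H5.
    replace (s * (s * t ^ 2 / 2 + t ^ 3 / 6 + t * s ^ 2 / 2) * / (s * (s + t)) * 2) with
      ((s * t^2 + t^3/3 + t * s^2) / (s + t)) by (field; lra).
    apply (Rmult_le_reg_r (s + t)). lra. replace ((s * t ^ 2 + t ^ 3 / 3 + t * s ^ 2) / (s + t) * (s + t)) with
      (s * t ^ 2 + t ^ 3 / 3 + t * s ^ 2) by (field; lra).
    unfold Phi. destruct (Rle_dec s 1); [|lra]. destruct (Rle_dec (s + t) 1).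
    + nra.
    + replace (6 * (2 - / (s + t) - s ^ 2) * (s + t)) with (6 * ((s + t) * (2 - s^2) - 1)) by (field; lra).
      assert ((s + t) * (2 - s^2) - 1 >= t * (s + t) / 2).
      { assert (1 - s^2 >= 1 - s) by nra. nra. }
      assert (s * t ^ 2 + t ^ 3 / 3 + t * s ^ 2 <= 7 * t / 3).
      { assert (t^2 <= 1) by nra. assert (s^2 <= 1) by nra. assert (0 <= s * t) by nra.
        assert (s * t^2 <= t) by (replace (s * t^2) with ((s * t) * t) by ring; nra).
        assert (t^3 <= t) by (replace (t^3) with (t^2 * t) by ring; nra).
        assert (t * s^2 <= t) by nra. lra. }
      nra.
  -
    assert (HR1 : Rabs R1 <= t).
    { unfold R1. eapply Rle_trans. apply Rabs_triang. rewrite !Rabs_mult.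
      assert (Rabs (cos t - 1) <= t^2/2) by (apply Rabs_le; lra).
      assert (Rabs (sin t - t) <= t^3/6) by (apply Rabs_le; lra).
      pose proof (abs_sin_le1 s). pose proof (abs_cos_le1 s). pose proof (Rabs_pos (sin s)). pose proof (Rabs_pos (cos t - 1)).
      pose proof (Rabs_pos (cos s)). pose proof (Rabs_pos (sin t - t)).
      assert (Rabs (sin s) * Rabs (cos t - 1) <= t^2/2) by nra.
      assert (Rabs (cos s) * Rabs (sin t - t) <= t^3/6) by nra. nra. }
    assert (Hsc : Rabs (s * cos s - sin s) <= 2 * s).
    { eapply Rle_trans. apply Rabs_triang. rewrite Rabs_Ropp, Rabs_mult, (Rabs_right s) by lra.
      pose proof (abs_sin_le1 s). pose proof (abs_cos_le1 s). nra. }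
    assert (Hn : Rabs num <= 3 * s * t).
    { rewrite Hnum. eapply Rle_trans. apply Rabs_triang. rewrite !Rabs_mult, (Rabs_right s), (Rabs_right t) by lra. nra. }
    assert (HS : Rabs (A + A') <= 2 / s).
    { eapply Rle_trans. apply Rabs_triang. unfold A, A'. pose proof (sinc_le_inv s Hs). pose proof (sinc_le_inv (s+t) ltac:(lra)).
      assert (/ (s + t) <= / s) by (apply Rinv_le_contravar; lra). lra. }
    assert (Rabs num * / (s * (s + t)) * Rabs (A + A') <= 3 * s * t * / (s * (s + t)) * (2 / s)).
    { apply Rmult_le_compat; try apply Rabs_pos. apply Rmult_le_pos; [apply Rabs_pos|lra].
      apply Rmult_le_compat_r; lra. auto. }
    eapply Rle_trans. apply H5. unfold Phi. destruct (Rle_dec (s + t) 1); [lra|]. destruct (Rle_dec s 1); [lra|].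
    right. field. lra.
Qed.

Lemma du_bound t n : 0 < t <= 1 -> (1 <= n)%nat ->
  Rabs (usq t n - usq t (S n)) <= 6 * (Phi (INR (S n) * t) - Phi (INR n * t)).
Proof. intros Ht Hn. unfold usq. rewrite S_INR. replace ((INR n + 1) * t) with (INR n * t + t) by ring.
  apply du_gen; auto. assert (1 <= INR n) by (apply INR_ge1; auto). nra. Qed.

Lemma var_u t K : 0 < t <= 1 -> sm (fun i => Rabs (usq t (S i) - usq t (S (S i)))) K <= 12.
Proof. intros Ht.
  assert (forall K, sm (fun i => Rabs (usq t (S i) - usq t (S (S i)))) K <= 6 * (Phi (INR (S K) * t) - Phi (INR 1 * t))).
  { induction K0. simpl sm. lra.
    change (sm (fun i => Rabs (usq t (S i) - usq t (S (S i)))) (S K0)) with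
      (sm (fun i => Rabs (usq t (S i) - usq t (S (S i)))) K0 + Rabs (usq t (S K0) - usq t (S (S K0)))).
    pose proof (du_bound t (S K0) Ht ltac:(lia)). lra. }
  eapply Rle_trans. apply H. pose proof (Phi_bounds (INR (S K) * t)). pose proof (Phi_bounds (INR 1 * t)).
  assert (0 <= INR (S K) * t) by (apply Rmult_le_pos; [apply pos_INR|lra]).
  assert (0 <= INR 1 * t) by (simpl; lra). specialize (H0 H2). specialize (H1 H3). lra. Qed.


Lemma trig_id b n x t : (1 <= n)%nat -> t <> 0 ->
  b n / INR n ^ 2 * sin (INR n * (x + 2 * t)) + b n / INR n ^ 2 * sin (INR n * (x - 2 * t))
  - 2 * (b n / INR n ^ 2 * sin (INR n * x)) = -4 * t^2 * (b n * sin (INR n * x) * usq t n).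
Proof. intros Hn Ht. assert (INR n <> 0) by (apply not_0_INR; lia). unfold usq.
  replace (INR n * (x + 2 * t)) with (INR n * x + 2 * (INR n * t)) by ring.
  replace (INR n * (x - 2 * t)) with (INR n * x - 2 * (INR n * t)) by ring.
  rewrite sin_plus, sin_minus, cos_2a_sin. field. split; auto. Qed.

Lemma P_diff b N x t : t <> 0 ->
  Psum b N (x + 2 * t) + Psum b N (x - 2 * t) - 2 * Psum b N x =
  -4 * t^2 * sm (fun i => b (S i) * sin (INR (S i) * x) * usq t (S i)) N.
Proof. intros Ht. unfold Psum. rewrite !sin_psum_sm. rewrite <- sm_scal, <- sm_plus, <- sm_scal, <- sm_minus.
  apply sm_ext. intros i Hi. apply trig_id; auto; lia. Qed.

Lemma abel2 b x fx t K :
  sm (fun i => b (S i) * sin (INR (S i) * x) * usq t (S i)) (S K) - fx * usq t 1 =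
  (sin_psum b (S K) x - fx) * usq t (S K) +
  sm (fun i => (sin_psum b (S i) x - fx) * (usq t (S i) - usq t (S (S i)))) K.
Proof. induction K.
  - change (sm (fun i => b (S i) * sin (INR (S i) * x) * usq t (S i)) 1) with (0 + b 1%nat * sin (INR 1 * x) * usq t 1).
    change (sm (fun i => (sin_psum b (S i) x - fx) * (usq t (S i) - usq t (S (S i)))) 0) with 0.
    change (sin_psum b 1 x) with (0 + b 1%nat * sin (INR 1 * x)). ring.
  - change (sm (fun i => b (S i) * sin (INR (S i) * x) * usq t (S i)) (S (S K))) with
      (sm (fun i => b (S i) * sin (INR (S i) * x) * usq t (S i)) (S K) + b (S (S K)) * sin (INR (S (S K)) * x) * usq t (S (S K))).
    change (sm (fun i => (sin_psum b (S i) x - fx) * (usq t (S i) - usq t (S (S i)))) (S K)) with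
      (sm (fun i => (sin_psum b (S i) x - fx) * (usq t (S i) - usq t (S (S i)))) K +
       (sin_psum b (S K) x - fx) * (usq t (S K) - usq t (S (S K)))).
    change (sin_psum b (S (S K)) x) with (sin_psum b (S K) x + b (S (S K)) * sin (INR (S (S K)) * x)).
    lra. Qed.

Lemma sm_trunc g N1 K : (forall i, 0 <= g i) ->
  sm (fun i => if Nat.ltb (S i) N1 then g i else 0) K <= sm g N1.
Proof. intros Hg. assert (forall K, sm (fun i => if Nat.ltb (S i) N1 then g i else 0) K <= sm g (min K N1)).
  { induction K0. simpl; lra. change (sm (fun i => if Nat.ltb (S i) N1 then g i else 0) (S K0)) with
      (sm (fun i => if Nat.ltb (S i) N1 then g i else 0) K0 + (if Nat.ltb (S K0) N1 then g K0 else 0)).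
    destruct (Nat.ltb (S K0) N1) eqn:E.
    - apply Nat.ltb_lt in E. replace (min (S K0) N1) with (S K0) by lia. replace (min K0 N1) with K0 in IHK0 by lia.
      simpl. lra.
    - eapply Rle_trans. rewrite Rplus_0_r. apply IHK0. apply sm_mono; auto. lia. }
  eapply Rle_trans. apply H. apply sm_mono; auto. lia. Qed.

Lemma riemann b B F x fx (Hb : forall n, (1 <= n)%nat -> 0 <= b n <= B)
  (HF : forall y N, (1 <= N)%nat -> Rabs (F y - Psum b N y) <= B / INR N)
  (Hfx : Un_cv (fun N => sin_psum b N x) fx) :
  forall eta, 0 < eta -> exists t0, 0 < t0 /\ forall t, 0 < t < t0 ->
    Rabs ((F (x + 2 * t) + F (x - 2 * t) - 2 * F x) / (4 * t^2) + fx) <= eta.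
Proof.
  intros eta Heta. set (e := eta / 15).
  assert (He : 0 < e) by (unfold e; lra).
  destruct (Hfx e He) as [N1' HN1']. set (N1 := max 1 N1').
  assert (HN1 : forall n, (N1 <= n)%nat -> Rabs (sin_psum b n x - fx) < e).
  { intros n Hn. apply HN1'. lia. }
  set (A0 := sm (fun i => Rabs (sin_psum b (S i) x - fx)) N1).
  assert (HA0 : 0 <= A0) by (apply sm_nonneg; intros; apply Rabs_pos).
  assert (HB : 0 <= B) by (pose proof (Hb 1%nat (le_n _)); lra).
  set (den := INR N1 ^ 2 * A0 + Rabs fx + 1).
  assert (Hden : 0 < den). { unfold den. pose proof (Rabs_pos fx). assert (0 <= INR N1 ^ 2 * A0) by (apply Rmult_le_pos; auto; apply pow_le, pos_INR). lra. }
  exists (Rmin 1 (e / den)). split. apply Rmin_pos; [lra| apply Rdiv_lt_0_compat; auto].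
  intros t [Ht0 Ht1]. assert (Htt1 : t <= 1) by (pose proof (Rmin_l 1 (e / den)); lra).
  assert (Hte : t < e / den) by (pose proof (Rmin_r 1 (e / den)); lra).
  set (u := usq t). set (W := fun N => sm (fun i => b (S i) * sin (INR (S i) * x) * usq t (S i)) N).
  assert (HINR1 : 1 <= INR N1) by (apply INR_ge1; unfold N1; lia).
  assert (HW : forall K, (N1 <= K)%nat -> Rabs (W (S K) - fx * u 1%nat) <= 13 * e + (2/3) * (INR N1 * t)^2 * A0).
  { intros K HK. unfold W, u. rewrite abel2. eapply Rle_trans. apply Rabs_triang.
    assert (T1 : Rabs ((sin_psum b (S K) x - fx) * usq t (S K)) <= e).
    { rewrite Rabs_mult. pose proof (usq_bounds t (S K) Ht0 ltac:(lia)). rewrite (Rabs_right (usq t (S K))) by lra.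
      pose proof (HN1 (S K) ltac:(lia)). pose proof (Rabs_pos (sin_psum b (S K) x - fx)). nra. }
    assert (T2 : Rabs (sm (fun i => (sin_psum b (S i) x - fx) * (usq t (S i) - usq t (S (S i)))) K) <=
       sm (fun i => if Nat.ltb (S i) N1 then Rabs (sin_psum b (S i) x - fx) else 0) K * ((2/3) * (INR N1 * t)^2)
       + e * sm (fun i => Rabs (usq t (S i) - usq t (S (S i)))) K).
    { eapply Rle_trans. apply sm_abs. rewrite <- sm_scal. rewrite Rmult_comm, <- sm_scal, <- sm_plus.
      apply sm_le. intros i Hi. rewrite Rabs_mult.
      pose proof (Rabs_pos (sin_psum b (S i) x - fx)). pose proof (Rabs_pos (usq t (S i) - usq t (S (S i)))).
      destruct (Nat.ltb (S i) N1) eqn:E.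
      - apply Nat.ltb_lt in E.
        assert (Rabs (usq t (S i) - usq t (S (S i))) <= (2/3) * (INR N1 * t)^2).
        { pose proof (usq_bounds t (S i) Ht0 ltac:(lia)). pose proof (usq_bounds t (S (S i)) Ht0 ltac:(lia)).
          pose proof (one_minus_usq t (S i) Ht0 ltac:(lia)). pose proof (one_minus_usq t (S (S i)) Ht0 ltac:(lia)).
          assert (INR (S i) * t <= INR N1 * t) by (apply Rmult_le_compat_r; [lra| apply le_INR; lia]).
          assert (INR (S (S i)) * t <= INR N1 * t) by (apply Rmult_le_compat_r; [lra| apply le_INR; lia]).
          assert (0 <= INR (S i) * t) by (apply Rmult_le_pos; [apply pos_INR|lra]).
          assert ((INR (S i) * t)^2 <= (INR N1 * t)^2) by (apply pow_incr; lra).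
          assert (0 <= INR (S (S i)) * t) by (apply Rmult_le_pos; [apply pos_INR|lra]).
          assert ((INR (S (S i)) * t)^2 <= (INR N1 * t)^2) by (apply pow_incr; lra).
          apply Rabs_le. lra. }
        assert (0 <= e) by lra. nra.
      - apply Nat.ltb_ge in E. pose proof (HN1 (S i) E). nra. }
    pose proof (sm_trunc (fun i => Rabs (sin_psum b (S i) x - fx)) N1 K (fun i => Rabs_pos _)).
    pose proof (var_u t K (conj Ht0 Htt1)). fold A0 in H.
    assert (0 <= (2/3) * (INR N1 * t)^2) by (apply Rmult_le_pos; [lra| apply pow2_ge_0]).
    assert (sm (fun i => if Nat.ltb (S i) N1 then Rabs (sin_psum b (S i) x - fx) else 0) K * ((2/3) * (INR N1 * t)^2)
       <= A0 * ((2/3) * (INR N1 * t)^2)) by (apply Rmult_le_compat_r; auto).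
    assert (e * sm (fun i => Rabs (usq t (S i) - usq t (S (S i)))) K <= e * 12) by (apply Rmult_le_compat_l; lra).
    lra. }
  set (Q := (F (x + 2 * t) + F (x - 2 * t) - 2 * F x) / (4 * t ^ 2)).
  assert (HQ : Rabs (Q + fx * u 1%nat) <= 13 * e + (2/3) * (INR N1 * t)^2 * A0).
  { apply (le_lim _ _ (B / t^2) (S N1)). intros N HN.
    replace N with (S (N - 1)) by lia. pose proof (HW (N - 1)%nat ltac:(lia)).
    pose proof (P_diff b (S (N - 1)) x t ltac:(lra)). fold W in H0.
    assert (HN' : (1 <= S (N - 1))%nat) by lia.
    pose proof (HF (x + 2 * t) _ HN'). pose proof (HF (x - 2 * t) _ HN'). pose proof (HF x _ HN').
    assert (Ht2 : 0 < t^2) by (apply pow_lt; lra).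
    assert (Q + fx * u 1%nat = - (W (S (N - 1)) - fx * u 1%nat) + ((F (x + 2 * t) - Psum b (S (N - 1)) (x + 2 * t))
       + (F (x - 2 * t) - Psum b (S (N - 1)) (x - 2 * t)) - 2 * (F x - Psum b (S (N - 1)) x)) / (4 * t^2)).
    { set (P1 := Psum b (S (N - 1)) (x + 2 * t)) in *. set (P2 := Psum b (S (N - 1)) (x - 2 * t)) in *.
      set (P3 := Psum b (S (N - 1)) x) in *.
      assert (Q - ((F (x + 2 * t) - P1) + (F (x - 2 * t) - P2) - 2 * (F x - P3)) / (4 * t^2) = (P1 + P2 - 2 * P3) / (4 * t^2))
        by (unfold Q; field; lra).
      rewrite H0 in H4. assert (H5 : forall w, -4 * t^2 * w / (4 * t^2) = - w) by (intros; field; lra).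
      rewrite H5 in H4. unfold W. lra. }
    rewrite H4. eapply Rle_trans. apply Rabs_triang. rewrite Rabs_Ropp.
    assert (Rabs (((F (x + 2 * t) - Psum b (S (N - 1)) (x + 2 * t)) + (F (x - 2 * t) - Psum b (S (N - 1)) (x - 2 * t))
       - 2 * (F x - Psum b (S (N - 1)) x)) / (4 * t ^ 2)) <= B / t ^ 2 / INR (S (N - 1))).
    { unfold Rdiv at 1. rewrite Rabs_mult, Rabs_inv, (Rabs_right (4 * t^2)) by lra.
      assert (Rabs ((F (x + 2 * t) - Psum b (S (N - 1)) (x + 2 * t)) + (F (x - 2 * t) - Psum b (S (N - 1)) (x - 2 * t))
       - 2 * (F x - Psum b (S (N - 1)) x)) <= 4 * (B / INR (S (N - 1)))).
      { eapply Rle_trans. apply Rabs_triang. rewrite Rabs_Ropp, Rabs_mult, (Rabs_right 2) by lra.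
        eapply Rle_trans. apply Rplus_le_compat_r. apply Rabs_triang. lra. }
      apply (Rmult_le_reg_r (4 * t^2)). lra. rewrite Rmult_assoc, Rinv_l by lra.
      replace (B / t ^ 2 / INR (S (N - 1)) * (4 * t ^ 2)) with (4 * (B / INR (S (N - 1)))) by (field; repeat split; try lra; try (apply not_0_INR; lia)).
      lra. }
    lra. }
  assert (Hu1 : Rabs (fx * u 1%nat - fx) <= Rabs fx * (t^2 / 3)).
  { replace (fx * u 1%nat - fx) with (- (fx * (1 - u 1%nat))) by ring. rewrite Rabs_Ropp, Rabs_mult.
    pose proof (usq_bounds t 1 Ht0 (le_n _)). pose proof (one_minus_usq t 1 Ht0 (le_n _)). simpl INR in H0.
    replace ((1 * t)^2) with (t^2) in H0 by ring. rewrite (Rabs_right (1 - u 1%nat)) by (unfold u; lra).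
    apply Rmult_le_compat_l. apply Rabs_pos. unfold u; lra. }
  assert (Hsmall : (2/3) * (INR N1 * t)^2 * A0 + Rabs fx * (t^2/3) <= e).
  { assert (t^2 <= t) by nra. 
    assert (t * den <= e). { apply (Rmult_le_reg_r (/ den)). apply Rinv_0_lt_compat; auto.
      replace (t * den * / den) with t by (field; lra). unfold Rdiv in Hte. lra. }
    unfold den in H0. pose proof (Rabs_pos fx).
    assert (0 <= INR N1 ^ 2 * A0) by (apply Rmult_le_pos; auto; apply pow_le, pos_INR).
    replace ((2/3) * (INR N1 * t)^2 * A0) with ((2/3) * t^2 * (INR N1 ^2 * A0)) by ring.
    assert (0 <= t^2) by apply pow2_ge_0. nra. }
  replace (Q + fx) with ((Q + fx * u 1%nat) - (fx * u 1%nat - fx)) by ring.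
  eapply Rle_trans. apply Rabs_triang. rewrite Rabs_Ropp. unfold e in *. lra.
Qed.


Lemma maxp G a c : a < c -> (forall x, a <= x <= c -> continuity_pt G x) -> G a <= 0 -> G c <= 0 ->
  (forall x, a < x < c -> forall r, 0 < r -> exists h, 0 < h < r /\ G (x + h) + G (x - h) - 2 * G x > 0) ->
  forall y, a <= y <= c -> G y <= 0.
Proof. intros Hac Hc Ha Hcc H y Hy. destruct (Rle_lt_dec (G y) 0) as [h|h]; auto. exfalso.
  destruct (continuity_ab_maj G a c ltac:(lra) Hc) as [x0 [Hmax Hx0]].
  pose proof (Hmax y Hy). assert (a < x0 < c). { split; destruct (Req_dec x0 a); destruct (Req_dec x0 c); subst; try lra. }
  destruct (H x0 H1 (Rmin (x0 - a) (c - x0))) as [hh [Hh1 Hh2]]. apply Rmin_pos; lra.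
  pose proof (Rmin_l (x0 - a) (c - x0)). pose proof (Rmin_r (x0 - a) (c - x0)).
  pose proof (Hmax (x0 + hh) ltac:(lra)). pose proof (Hmax (x0 - hh) ltac:(lra)). lra. Qed.

Lemma psi_ineq b B F f (Hb : forall n, (1 <= n)%nat -> 0 <= b n <= B)
  (HF : forall y N, (1 <= N)%nat -> Rabs (F y - Psum b N y) <= B / INR N)
  (HFc : continuity F) (HF0 : F 0 = 0)
  (Hf : forall x, Un_cv (fun N => sin_psum b N x) (f x)) (Hc0 : continuity_pt f 0) (Hf0 : f 0 = 0) :
  forall eps, 0 < eps -> exists d, 0 < d /\ forall y1 y2, 0 < y1 < y2 -> y2 < d ->
    F y1 / y1 <= F y2 / y2 + eps * y2 /\ F y2 / y2 - eps * y2 <= F y1 / y1.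
Proof.
  intros eps Heps. destruct (Hc0 eps Heps) as [al [Hal Hal2]]. exists al. split; auto.
  intros y1 y2 Hy Hy2.
  assert (Hfx : forall x0, 0 < x0 < y2 -> Rabs (f x0) < eps).
  { intros x0 Hx0. pose proof (Hal2 x0). simpl in H. unfold R_dist in H. rewrite Hf0, Rminus_0_r, Rminus_0_r in H.
    apply H. split. split; [exact I| intro; lra]. rewrite Rabs_right; lra. }
  assert (Hriem : forall x0, 0 < x0 < y2 -> forall r, 0 < r -> exists t, 0 < t /\ 2 * t < r /\
     Rabs ((F (x0 + 2 * t) + F (x0 - 2 * t) - 2 * F x0) / (4 * t^2) + f x0) <= eps / 2).
  { intros x0 Hx0 r Hr. destruct (riemann b B F x0 (f x0) Hb HF (Hf x0) (eps/2) ltac:(lra)) as [t0 [Ht0 Ht]].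
    exists (Rmin t0 r / 4). assert (0 < Rmin t0 r) by (apply Rmin_pos; lra).
    pose proof (Rmin_l t0 r). pose proof (Rmin_r t0 r). split; [lra|]. split; [lra|]. apply Ht. lra. }
  split.
  - set (K1 := F y2 / y2 + eps * y2).
    pose proof (maxp (fun x => F x + (eps * (x * x) - x * K1)) 0 y2 ltac:(lra)) as MP.
    assert (G : F y1 + (eps * (y1 * y1) - y1 * K1) <= 0).
    { apply MP; try lra.
      - intros x _. apply (continuity_pt_plus F (fun x => eps * (x*x) - x*K1)). apply HFc. apply derivable_continuous_pt. reg.
      - cbv beta. unfold K1. right. field. lra.
      - intros x0 Hx0 r Hr. destruct (Hriem x0 Hx0 r Hr) as [t [Ht1 [Ht2 Ht3]]]. exists (2 * t). split; [lra|].
        cbv beta. pose proof (Hfx x0 Hx0). apply abs_le_inv in Ht3. apply Rabs_def2 in H.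
        set (Q := (F (x0 + 2 * t) + F (x0 - 2 * t) - 2 * F x0) / (4 * t ^ 2)) in *.
        assert (F (x0 + 2 * t) + F (x0 - 2 * t) - 2 * F x0 = 4 * t^2 * Q) by (unfold Q; field; lra).
        assert (0 < t^2) by (apply pow_lt; lra).
        replace (F (x0 + 2 * t) + (eps * ((x0 + 2 * t) * (x0 + 2 * t)) - (x0 + 2 * t) * K1) +
          (F (x0 - 2 * t) + (eps * ((x0 - 2 * t) * (x0 - 2 * t)) - (x0 - 2 * t) * K1)) -
          2 * (F x0 + (eps * (x0 * x0) - x0 * K1))) with ((F (x0 + 2 * t) + F (x0 - 2 * t) - 2 * F x0) + 8 * eps * t^2) by ring.
        rewrite H0. nra. }
    fold K1. apply (Rmult_le_reg_r y1); [lra|]. replace (F y1 / y1 * y1) with (F y1) by (field; lra).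
    rewrite (Rmult_comm K1 y1). assert (0 <= eps * (y1 * y1)) by nra. lra.
  - set (K2 := F y2 / y2 - eps * y2).
    pose proof (maxp (fun x => (eps * (x * x) + x * K2) - F x) 0 y2 ltac:(lra)) as MP.
    assert (G : (eps * (y1 * y1) + y1 * K2) - F y1 <= 0).
    { apply MP; try lra.
      - intros x _. apply (continuity_pt_minus (fun x => eps * (x*x) + x*K2) F). apply derivable_continuous_pt. reg. apply HFc.
      - cbv beta. unfold K2. right. field. lra.
      - intros x0 Hx0 r Hr. destruct (Hriem x0 Hx0 r Hr) as [t [Ht1 [Ht2 Ht3]]]. exists (2 * t). split; [lra|].
        cbv beta. pose proof (Hfx x0 Hx0). apply abs_le_inv in Ht3. apply Rabs_def2 in H.
        set (Q := (F (x0 + 2 * t) + F (x0 - 2 * t) - 2 * F x0) / (4 * t ^ 2)) in *.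
        assert (F (x0 + 2 * t) + F (x0 - 2 * t) - 2 * F x0 = 4 * t^2 * Q) by (unfold Q; field; lra).
        assert (0 < t^2) by (apply pow_lt; lra).
        replace (eps * ((x0 + 2 * t) * (x0 + 2 * t)) + (x0 + 2 * t) * K2 - F (x0 + 2 * t) +
          (eps * ((x0 - 2 * t) * (x0 - 2 * t)) + (x0 - 2 * t) * K2 - F (x0 - 2 * t)) -
          2 * (eps * (x0 * x0) + x0 * K2 - F x0)) with (- (F (x0 + 2 * t) + F (x0 - 2 * t) - 2 * F x0) + 8 * eps * t^2) by ring.
        rewrite H0. nra. }
    fold K2. apply (Rmult_le_reg_r y1); [lra|]. replace (F y1 / y1 * y1) with (F y1) by (field; lra).
    rewrite (Rmult_comm K2 y1). assert (0 <= eps * (y1 * y1)) by nra. lra.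
Qed.


Definition Tsum (b : nat -> R) K := sm (fun i => b (S i) / INR (S i)) K.

Lemma Psum_scal b N y c : Psum b N y * c = sm (fun i => b (S i) / INR (S i) ^ 2 * sin (INR (S i) * y) * c) N.
Proof. unfold Psum. rewrite sin_psum_sm, Rmult_comm, <- sm_scal. apply sm_ext; intros; ring. Qed.

Lemma sin_56 s : 0 < s <= 1 -> 5/6 * s <= sin s.
Proof. intros. pose proof (sin_lo s ltac:(lra) ltac:(pose proof PI_gt3; lra)). nra. Qed.

Lemma sin_085 s : 1 <= s <= 3 -> sin s <= 17/20 * s.
Proof. intros. pose proof (sin_hi s ltac:(lra) ltac:(pose proof PI_gt3; lra)).
  assert (1 - s^2/6 + s^4/120 <= 17/20).
  { assert (1 <= s^2 <= 9) by nra. replace (s^4) with (s^2 * s^2) by ring.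
    assert ((s^2 - 1) * (s^2 - 9) <= 0) by nra. nra. }
  nra. Qed.

Lemma psi_lower1 b B K N : (forall n, (1 <= n)%nat -> 0 <= b n <= B) -> (1 <= K <= N)%nat ->
  5/6 * Tsum b K - B <= Psum b N (/ INR K) * INR K.
Proof. intros Hb HK. assert (HK1 : 1 <= INR K) by (apply INR_ge1; lia).
  assert (HB : 0 <= B) by (pose proof (Hb 1%nat (le_n _)); lra).
  rewrite Psum_scal. replace N with (K + (N - K))%nat by lia. rewrite sm_add.
  assert (A1 : 5/6 * Tsum b K <= sm (fun i => b (S i) / INR (S i) ^ 2 * sin (INR (S i) * / INR K) * INR K) K).
  { unfold Tsum. rewrite <- sm_scal. apply sm_le. intros i Hi. pose proof (Hb (S i) ltac:(lia)).
    assert (Hn : 1 <= INR (S i)) by (apply INR_ge1; lia). assert (INR (S i) <= INR K) by (apply le_INR; lia).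
    assert (0 < INR (S i) * / INR K <= 1).
    { split. apply Rmult_lt_0_compat; [lra| apply Rinv_0_lt_compat; lra].
      apply (Rmult_le_reg_r (INR K)); [lra|]. rewrite Rmult_assoc, Rinv_l by lra. lra. }
    pose proof (sin_56 _ H1).
    replace (b (S i) / INR (S i) ^ 2 * sin (INR (S i) * / INR K) * INR K) with
      ((b (S i) / INR (S i)) * (sin (INR (S i) * / INR K) / (INR (S i) * / INR K))) by (field; lra).
    assert (5/6 <= sin (INR (S i) * / INR K) / (INR (S i) * / INR K)).
    { apply (Rmult_le_reg_r (INR (S i) * / INR K)); [lra|].
      replace (sin (INR (S i) * / INR K) / (INR (S i) * / INR K) * (INR (S i) * / INR K)) with (sin (INR (S i) * / INR K)) by (field; lra). lra. }
    assert (0 <= b (S i) / INR (S i)) by (apply Rmult_le_pos; [lra| apply Rlt_le, Rinv_0_lt_compat; lra]).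
    replace (5/6 * (b (S i) / INR (S i))) with ((b (S i) / INR (S i)) * (5/6)) by ring.
    apply Rmult_le_compat_l; auto. }
  assert (A2 : - B <= sm (fun i => b (S (K + i)) / INR (S (K + i)) ^ 2 * sin (INR (S (K + i)) * / INR K) * INR K) (N - K)).
  { eapply Rle_trans. 2:{ apply (sm_le (fun i => - (B * INR K) * / INR (S (K + i)) ^ 2)).
      intros i Hi. pose proof (Hb (S (K + i)) ltac:(lia)). pose proof (SIN_bound (INR (S (K + i)) * / INR K)).
      assert (0 < INR (S (K + i))) by (apply lt_0_INR; lia).
      assert (0 < / INR (S (K + i)) ^ 2) by (apply Rinv_0_lt_compat, pow_lt; lra).
      unfold Rdiv. assert (0 <= b (S (K + i)) * / INR (S (K + i)) ^ 2) by (apply Rmult_le_pos; lra).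
      assert (b (S (K + i)) * / INR (S (K + i)) ^ 2 <= B * / INR (S (K + i)) ^ 2) by (apply Rmult_le_compat_r; lra).
      set (a := b (S (K + i)) * / INR (S (K + i)) ^ 2) in *. set (c := sin (INR (S (K + i)) * / INR K)) in *.
      set (w := / INR (S (K + i)) ^ 2) in *.
      assert (- a <= a * c) by nra. assert (- (B * w) <= - a) by lra.
      assert (- (B * w) * INR K <= a * c * INR K) by (apply Rmult_le_compat_r; lra).
      replace (- (B * INR K) * w) with (- (B * w) * INR K) by ring. lra. }
    rewrite sm_scal. pose proof (inv_sq_sum K (N - K) ltac:(lia)).
    assert (0 < / INR (K + (N - K))) by (apply Rinv_0_lt_compat, lt_0_INR; lia).
    assert (B * INR K * sm (fun i => / INR (S (K + i)) ^ 2) (N - K) <= B * INR K * / INR K).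
    { apply Rmult_le_compat_l. nra. lra. }
    replace (B * INR K * / INR K) with B in H1 by (field; lra). lra. }
  lra. Qed.

Lemma psi_lower2 b B N1 N y : (forall n, (1 <= n)%nat -> 0 <= b n <= B) -> (1 <= N1 <= N)%nat -> 0 < y ->
  INR N1 * y <= 1 -> 2 * Tsum b N1 - Tsum b N - B * INR N1 ^ 2 * y ^ 2 / 6 <= Psum b N y / y.
Proof. intros Hb HN Hy Hy1. assert (HN1 : 1 <= INR N1) by (apply INR_ge1; lia).
  assert (HB : 0 <= B) by (pose proof (Hb 1%nat (le_n _)); lra).
  unfold Rdiv at 2. rewrite Psum_scal. replace N with (N1 + (N - N1))%nat by lia. rewrite sm_add.
  unfold Tsum. rewrite sm_add. replace (N1 + (N - N1))%nat with N by lia.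
  set (g := fun i => b (S i) / INR (S i)).
  assert (A1 : sm g N1 - B * INR N1 ^ 2 * y ^ 2 / 6 <= sm (fun i => b (S i) / INR (S i) ^ 2 * sin (INR (S i) * y) * / y) N1).
  { replace (B * INR N1 ^ 2 * y ^ 2 / 6) with (sm (fun _ => B * INR N1 * y^2 / 6) N1) by (rewrite sm_const; field).
    rewrite <- sm_minus. apply sm_le. intros i Hi. unfold g. pose proof (Hb (S i) ltac:(lia)).
    assert (Hn : 1 <= INR (S i)) by (apply INR_ge1; lia). assert (INR (S i) <= INR N1) by (apply le_INR; lia).
    assert (0 < INR (S i) * y <= 1) by (split; nra).
    pose proof (sin_lo (INR (S i) * y) ltac:(lra) ltac:(pose proof PI_gt3; lra)).
    set (n := INR (S i)) in *.
    replace (b (S i) / n ^ 2 * sin (n * y) * / y) with (b (S i) / n ^ 2 / y * sin (n * y)) by (field; lra).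
    assert (0 <= b (S i) / n ^ 2 / y). { unfold Rdiv. apply Rmult_le_pos; [apply Rmult_le_pos|]; try lra.
      apply Rlt_le, Rinv_0_lt_compat, pow_lt; lra. apply Rlt_le, Rinv_0_lt_compat; lra. }
    eapply Rle_trans. 2:{ apply Rmult_le_compat_l. apply H3. apply H2. }
    replace (b (S i) / n ^ 2 / y * (n * y - (n * y) ^ 3 / 6)) with (b (S i) / n - b (S i) * n * y^2 / 6) by (field; lra).
    assert (b (S i) * n * y^2 <= B * INR N1 * y^2). { apply Rmult_le_compat_r. apply pow2_ge_0.
      apply Rmult_le_compat; lra. } lra. }
  assert (A2 : - sm (fun i => g (N1 + i)%nat) (N - N1) <=
     sm (fun i => b (S (N1 + i)) / INR (S (N1 + i)) ^ 2 * sin (INR (S (N1 + i)) * y) * / y) (N - N1)).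
  { rewrite <- (Rmult_1_l (sm (fun i => g (N1 + i)%nat) (N - N1))). rewrite Ropp_mult_distr_l, <- sm_scal.
    apply sm_le. intros i Hi. unfold g. pose proof (Hb (S (N1 + i)) ltac:(lia)).
    assert (0 < INR (S (N1 + i))) by (apply lt_0_INR; lia). set (n := INR (S (N1 + i))) in *.
    pose proof (sin_ge_neg (n * y) ltac:(nra)).
    replace (b (S (N1 + i)) / n ^ 2 * sin (n * y) * / y) with (b (S (N1 + i)) / n ^ 2 / y * sin (n * y)) by (field; lra).
    assert (0 <= b (S (N1 + i)) / n ^ 2 / y). { unfold Rdiv. apply Rmult_le_pos; [apply Rmult_le_pos|]; try lra.
      apply Rlt_le, Rinv_0_lt_compat, pow_lt; lra. apply Rlt_le, Rinv_0_lt_compat; lra. }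
    eapply Rle_trans. 2:{ apply Rmult_le_compat_l. apply H2. apply H1. }
    right. field. lra. }
  unfold g in *. lra. Qed.

Lemma sm_ge_term g n r : (forall i, (i < n)%nat -> 0 <= g i) -> (r < n)%nat -> g r <= sm g n.
Proof. intros H Hr. replace n with (S r + (n - S r))%nat by lia. rewrite sm_add.
  assert (0 <= sm g r) by (apply sm_nonneg; intros; apply H; lia).
  assert (0 <= sm (fun i => g (S r + i)%nat) (n - S r)) by (apply sm_nonneg; intros; apply H; lia).
  change (sm g (S r)) with (sm g r + g r). lra. Qed.

Lemma psi_upper b B Q N : (forall n, (1 <= n)%nat -> 0 <= b n <= B) -> (1 <= Q)%nat -> (3 * Q <= N)%nat ->
  Psum b N (/ INR Q) * INR Q <= Tsum b N - 1/20 / INR Q * sm (fun i => b (Q + i)%nat) (2 * Q + 1).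
Proof. intros Hb HQ HN. assert (HQ1 : 1 <= INR Q) by (apply INR_ge1; lia).
  rewrite Psum_scal. unfold Tsum.
  set (g := fun i => b (S i) / INR (S i) - b (S i) / INR (S i) ^ 2 * sin (INR (S i) * / INR Q) * INR Q).
  assert (Hg : forall i, 0 <= g i).
  { intros i. unfold g. pose proof (Hb (S i) ltac:(lia)). assert (0 < INR (S i)) by (apply lt_0_INR; lia).
    assert (0 < INR (S i) * / INR Q) by (apply Rmult_lt_0_compat; [lra| apply Rinv_0_lt_compat; lra]).
    pose proof (sin_le_id (INR (S i) * / INR Q) ltac:(lra)).
    replace (b (S i) / INR (S i) - b (S i) / INR (S i) ^ 2 * sin (INR (S i) * / INR Q) * INR Q) with
      (b (S i) / INR (S i) ^ 2 * INR Q * (INR (S i) * / INR Q - sin (INR (S i) * / INR Q))) by (field; lra).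
    apply Rmult_le_pos; [|lra]. apply Rmult_le_pos; [|lra]. unfold Rdiv. apply Rmult_le_pos; [lra|].
    apply Rlt_le, Rinv_0_lt_compat, pow_lt; lra. }
  assert (sm g N >= 1/20 / INR Q * sm (fun i => b (Q + i)%nat) (2 * Q + 1)).
  { replace N with ((Q - 1) + ((2 * Q + 1) + (N - 3 * Q)))%nat by lia. rewrite (sm_add g (Q - 1)).
    rewrite (sm_add (fun i => g (Q - 1 + i)%nat) (2 * Q + 1)).
    assert (0 <= sm g (Q - 1)) by (apply sm_nonneg; auto).
    assert (0 <= sm (fun i => g (Q - 1 + (2 * Q + 1 + i))%nat) (N - 3 * Q)) by (apply sm_nonneg; auto).
    assert (1/20 / INR Q * sm (fun i => b (Q + i)%nat) (2 * Q + 1) <= sm (fun i => g (Q - 1 + i)%nat) (2 * Q + 1)).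
    { rewrite <- sm_scal. apply sm_le. intros i Hi. unfold g. replace (S (Q - 1 + i)) with (Q + i)%nat by lia.
      pose proof (Hb (Q + i)%nat ltac:(lia)). assert (Hn1 : INR Q <= INR (Q + i)) by (apply le_INR; lia).
      assert (Hn2 : INR (Q + i) <= 3 * INR Q). { replace 3 with (INR 3) by (simpl; lra). rewrite <- mult_INR. apply le_INR; lia. }
      set (n := INR (Q + i)) in *. set (q := INR Q) in *.
      assert (1 <= n * / q <= 3). { split. apply (Rmult_le_reg_r q); [lra|]. rewrite Rmult_assoc, Rinv_l by lra. lra.
        apply (Rmult_le_reg_r q); [lra|]. rewrite Rmult_assoc, Rinv_l by lra. lra. }
      pose proof (sin_085 _ H2).
      replace (b (Q + i)%nat / n - b (Q + i)%nat / n ^ 2 * sin (n * / q) * q) with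
        (b (Q + i)%nat / n ^ 2 * q * (n * / q - sin (n * / q))) by (field; lra).
      assert (n * / q - sin (n * / q) >= 3/20 * (n * / q)) by lra.
      assert (0 <= b (Q + i)%nat / n ^ 2 * q). { unfold Rdiv. apply Rmult_le_pos; [|lra]. apply Rmult_le_pos; [lra|].
        apply Rlt_le, Rinv_0_lt_compat, pow_lt; lra. }
      eapply Rle_trans. 2:{ apply Rmult_le_compat_l. apply H5. apply Rge_le, H4. }
      replace (b (Q + i)%nat / n ^ 2 * q * (3 / 20 * (n * / q))) with (3/20 * b (Q + i)%nat / n) by (field; lra).
      apply (Rmult_le_reg_r (n * q)). nra. replace (1 / 20 / q * b (Q + i)%nat * (n * q)) with (1/20 * b (Q + i)%nat * n) by (field; lra).
      replace (3 / 20 * b (Q + i)%nat / n * (n * q)) with (3/20 * b (Q + i)%nat * q) by (field; lra). nra. }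
    lra. }
  unfold g in H. rewrite sm_minus in H. lra. Qed.


Lemma count_lemma b N0 M (Hb : forall n : nat, (1 <= n)%nat -> 0 <= b n) (HN0 : (1 <= N0)%nat) (HM : 0 < M)
  (HC : forall m : nat, (1 <= m)%nat -> var_block b m <= M * block_max b m N0) Q j :
  (1 <= Q)%nat -> (N0 <= Q)%nat -> (2 * Q <= j <= 2 * Q + 1)%nat ->
  INR j * b j <= 4 * INR N0 * (1 + M) * sm (fun i => b (Q + i)%nat) (2 * Q + 1).
Proof. intros HQ HNQ Hj.
  set (W := sm (fun i => b (Q + i)%nat) (2 * Q + 1)).
  assert (Hnn : forall i, 0 <= b (Q + i)%nat) by (intros; apply Hb; lia).
  set (K := ((j - Q) / N0)%nat).
  assert (HKN : (K * N0 <= j - Q)%nat) by (unfold K; rewrite Nat.mul_comm; apply Nat.Div0.mul_div_le; lia).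
  assert (HKN2 : (j - Q < K * N0 + N0)%nat).
  { pose proof (Nat.div_mod (j - Q) N0 ltac:(lia)). pose proof (Nat.mod_upper_bound (j - Q) N0 ltac:(lia)). unfold K. nia. }
  assert (Hcl : forall k, (k <= K)%nat -> INR k * b j <= (1 + M) * sm (fun i => b (Q + i)%nat) (k * N0)).
  { induction k; intros Hk. simpl. lra.
    pose proof (IHk ltac:(lia)).
    destruct (window_p b N0 M HN0 HM HC j (Q + k * N0)%nat ltac:(lia) ltac:(nia)) as [p [Hp Hbp]].
    replace (S k * N0)%nat with (k * N0 + N0)%nat by lia. rewrite sm_add.
    assert (b p <= sm (fun i => b (Q + (k * N0 + i))%nat) N0).
    { replace p with (Q + (k * N0 + (p - Q - k * N0)))%nat by lia. apply (sm_ge_term (fun i => b (Q + (k * N0 + i))%nat)).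
      intros; auto. lia. }
    assert ((1 + M) * b p <= (1 + M) * sm (fun i => b (Q + (k * N0 + i))%nat) N0) by (apply Rmult_le_compat_l; lra).
    rewrite S_INR. lra. }
  pose proof (Hcl K (le_n _)).
  assert (sm (fun i => b (Q + i)%nat) (K * N0) <= W) by (apply sm_mono; auto; lia).
  assert (Hbj0 : 0 <= b j) by (apply Hb; lia).
  assert (HbW : b j <= (1 + M) * W).
  { destruct (window_p b N0 M HN0 HM HC j Q ltac:(lia) ltac:(lia)) as [p [Hp Hbp]].
    assert (b p <= W). { unfold W. replace p with (Q + (p - Q))%nat by lia. apply (sm_ge_term (fun i => b (Q + i)%nat)).
      intros; auto. lia. }
    nra. }
  assert (HKr : INR j / 2 - INR N0 <= INR K * INR N0).
  { rewrite <- mult_INR. assert (INR (j - Q) < INR (K * N0 + N0)) by (apply lt_INR; lia).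
    rewrite plus_INR, minus_INR in H1 by lia. assert (2 * INR Q <= INR j). { replace 2 with (INR 2) by (simpl; lra).
      rewrite <- mult_INR. apply le_INR; lia. } lra. }
  assert (0 <= W) by (apply sm_nonneg; auto).
  assert (HN0r : 1 <= INR N0) by (apply INR_ge1; auto).
  assert ((INR j / 2 - INR N0) * b j <= INR N0 * ((1 + M) * W)).
  { eapply Rle_trans. apply Rmult_le_compat_r; [lra| apply HKr].
    replace (INR K * INR N0 * b j) with (INR N0 * (INR K * b j)) by ring. apply Rmult_le_compat_l; [lra|]. eapply Rle_trans; [apply H| apply Rmult_le_compat_l; lra]. }
  assert (INR N0 * b j <= INR N0 * ((1 + M) * W)) by (apply Rmult_le_compat_l; lra).
  nra. Qed.

Lemma Tsum_mono b K K' : (forall n, (1 <= n)%nat -> 0 <= b n) -> (K <= K')%nat -> Tsum b K <= Tsum b K'.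
Proof. intros Hb H. unfold Tsum. apply sm_mono; auto. intros i. apply Rmult_le_pos. apply Hb; lia.
  apply Rlt_le, Rinv_0_lt_compat, lt_0_INR; lia. Qed.

Lemma ii_to_nb b N0 M (Hb : forall n : nat, (1 <= n)%nat -> 0 <= b n) (HN0 : (1 <= N0)%nat) (HM : 0 < M)
  (HC : forall m : nat, (1 <= m)%nat -> var_block b m <= M * block_max b m N0) :
  sin_series_conv_cont b -> Un_cv (fun n => INR n * b n) 0.
Proof.
  intros [f [Hf Hcont]].
  destruct (b_bounded b N0 M Hb HN0 HM HC (fun x => ex_intro _ (f x) (Hf x))) as [B [HB HBb]].
  assert (Hb' : forall n, (1 <= n)%nat -> 0 <= b n <= B) by (intros; split; auto).
  destruct (F_exists b B Hb') as [F [HF [HFc HF0]]].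
  assert (Hf0 : f 0 = 0).
  { apply (UL_sequence (fun N => sin_psum b N 0)); auto. intros e He. exists O. intros n _.
    rewrite psum_zero. unfold R_dist. rewrite Rminus_0_r, Rabs_R0. lra. }
  assert (HW : forall e, 0 < e -> exists Q0, forall Q, (Q0 <= Q)%nat -> (1 <= Q)%nat ->
     sm (fun i => b (Q + i)%nat) (2 * Q + 1) <= e).
  { intros e He. set (e1 := e / 20). assert (He1 : 0 < e1) by (unfold e1; lra).
    destruct (psi_ineq b B F f Hb' HF HFc HF0 Hf (Hcont 0) Hf0 e1 He1) as [d [Hd Hpsi]].
    assert (Hl1 : forall K, (1 <= K)%nat -> 5/6 * Tsum b K - B <= F (/ INR K) * INR K).
    { intros K HK. apply (le_lim _ _ (B * INR K) K). intros N HN.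
      pose proof (psi_lower1 b B K N Hb' ltac:(lia)). pose proof (HF (/ INR K) N ltac:(lia)).
      apply abs_le_inv in H0. assert (0 < INR K) by (apply lt_0_INR; lia). assert (0 < INR N) by (apply lt_0_INR; lia).
      assert (Psum b N (/ INR K) * INR K <= F (/ INR K) * INR K + B / INR N * INR K) by nra.
      replace (B * INR K / INR N) with (B / INR N * INR K) by (field; lra). lra. }
    set (y2 := d / 2).
    destruct (arch 1 y2) as [K0 [HK0 HK0']]; [unfold y2; lra|].
    set (Tb := 6/5 * (F y2 / y2 + e1 * y2 + B)).
    assert (HT : forall K, Tsum b K <= Tb).
    { intros K. apply Rle_trans with (Tsum b (max K K0)). apply Tsum_mono; auto; lia.
      set (K' := max K K0). pose proof (Hl1 K' ltac:(unfold K'; lia)). pose proof (HK0' K' ltac:(unfold K'; lia)).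
      assert (0 < INR K') by (apply lt_0_INR; unfold K'; lia).
      assert (0 < / INR K') by (apply Rinv_0_lt_compat; auto).
      destruct (Hpsi (/ INR K') y2) as [H3 _]. split; auto. unfold Rdiv in H0; lra. unfold y2; lra.
      replace (F (/ INR K') / / INR K') with (F (/ INR K') * INR K') in H3 by (field; lra).
      unfold Tb. lra. }
    assert (Hgr : Un_growing (Tsum b)).
    { intros n. unfold Tsum. change (sm (fun i => b (S i) / INR (S i)) (S n)) with (sm (fun i => b (S i) / INR (S i)) n + b (S n) / INR (S n)).
      assert (0 <= b (S n) / INR (S n)) by (apply Rmult_le_pos; [apply Hb; lia| apply Rlt_le, Rinv_0_lt_compat, lt_0_INR; lia]). lra. }
    assert (Hub : has_ub (Tsum b)). { exists Tb. intros x [i Hi]. subst. apply HT. }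
    destruct (growing_cv _ Hgr Hub) as [S HS].
    pose proof (growing_ineq _ _ Hgr HS) as HTS.
    assert (HSle : forall y, 0 < y < d -> S <= F y / y + e1 * y).
    { intros y Hy. destruct (Rle_lt_dec S (F y / y + e1 * y)) as [h|h]; auto. exfalso.
      set (eta := (S - (F y / y + e1 * y)) / 6). assert (Heta : 0 < eta) by (unfold eta; lra).
      destruct (HS eta Heta) as [N1' HN1']. set (N1 := max 1 N1').
      pose proof (HN1' N1 ltac:(unfold N1; lia)). unfold R_dist in H. apply Rabs_def2 in H.
      assert (HN1r : 1 <= INR N1) by (apply INR_ge1; unfold N1; lia).
      set (den := B * INR N1 ^ 2 + 1). assert (Hden : 0 < den) by (unfold den; assert (0 <= INR N1 ^ 2) by (apply pow_le; lra); nra).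
      set (y1 := Rmin (y / 2) (Rmin (/ INR N1) (eta / den))).
      assert (Hy1 : 0 < y1). { unfold y1. apply Rmin_pos. lra. apply Rmin_pos. apply Rinv_0_lt_compat; lra. apply Rdiv_lt_0_compat; lra. }
      assert (Hy1a : y1 <= y / 2) by apply Rmin_l.
      assert (Hy1b : y1 <= / INR N1) by (eapply Rle_trans; [apply Rmin_r| apply Rmin_l]).
      assert (Hy1c : y1 <= eta / den) by (eapply Rle_trans; [apply Rmin_r| apply Rmin_r]).
      assert (HNy : INR N1 * y1 <= 1). { apply (Rmult_le_compat_l (INR N1)) in Hy1b; [|lra]. rewrite Rinv_r in Hy1b by lra. lra. }
      assert (HL2 : 2 * Tsum b N1 - S - B * INR N1 ^ 2 * y1 ^ 2 / 6 <= F y1 / y1).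
      { apply (le_lim _ _ (B / y1) N1). intros N HN.
        pose proof (psi_lower2 b B N1 N y1 Hb' ltac:(unfold N1 in *; lia) Hy1 HNy).
        pose proof (HTS N). pose proof (HF y1 N ltac:(unfold N1 in *; lia)). apply abs_le_inv in H2.
        assert (0 < INR N) by (apply lt_0_INR; unfold N1 in *; lia).
        assert (Psum b N y1 / y1 <= F y1 / y1 + B / y1 / INR N).
        { replace (F y1 / y1 + B / y1 / INR N) with ((F y1 + B / INR N) / y1) by (field; lra).
          unfold Rdiv. apply Rmult_le_compat_r. apply Rlt_le, Rinv_0_lt_compat; lra. unfold Rdiv in H2; lra. }
        lra. }
      assert (HBs : B * INR N1 ^ 2 * y1 ^ 2 <= eta).
      { assert (y1 <= 1) by (assert (/ INR N1 <= 1) by (rewrite <- Rinv_1; apply Rinv_le_contravar; lra); lra).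
        assert (y1 * den <= eta). { apply (Rmult_le_compat_r den) in Hy1c; [|lra]. replace (eta / den * den) with eta in Hy1c by (field; lra). lra. }
        unfold den in H1. assert (0 <= B * INR N1 ^ 2) by (apply Rmult_le_pos; [lra| apply pow_le; lra]).
        assert (y1^2 <= y1) by nra. nra. }
      destruct (Hpsi y1 y) as [H3 _]. lra. lra.
      assert (Tsum b N1 > S - eta) by lra. unfold eta in *. lra. }
    destruct (arch 1 d Hd) as [Q0 [HQ0 HQ0']]. exists Q0. intros Q HQ HQ1.
    assert (HQr : 0 < INR Q) by (apply lt_0_INR; lia).
    assert (Hup : F (/ INR Q) * INR Q <= S - 1/20 / INR Q * sm (fun i => b (Q + i)%nat) (2 * Q + 1)).
    { apply (le_lim _ _ (B * INR Q) (3 * Q)). intros N HN.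
      pose proof (psi_upper b B Q N Hb' HQ1 HN). pose proof (HTS N). pose proof (HF (/ INR Q) N ltac:(lia)).
      apply abs_le_inv in H1. assert (0 < INR N) by (apply lt_0_INR; lia).
      assert (F (/ INR Q) * INR Q <= Psum b N (/ INR Q) * INR Q + B / INR N * INR Q) by nra.
      replace (B * INR Q / INR N) with (B / INR N * INR Q) by (field; lra). lra. }
    pose proof (HQ0' Q HQ). assert (0 < / INR Q) by (apply Rinv_0_lt_compat; auto).
    pose proof (HSle (/ INR Q) ltac:(split; [auto| unfold Rdiv in H; lra])).
    replace (F (/ INR Q) / / INR Q) with (F (/ INR Q) * INR Q) in H1 by (field; lra).
    assert (1/20 / INR Q * sm (fun i => b (Q + i)%nat) (2 * Q + 1) <= e1 * / INR Q) by lra.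
    apply (Rmult_le_compat_l (20 * INR Q)) in H2; [|lra].
    replace (20 * INR Q * (1 / 20 / INR Q * sm (fun i : nat => b (Q + i)%nat) (2 * Q + 1))) with
      (sm (fun i : nat => b (Q + i)%nat) (2 * Q + 1)) in H2 by (field; lra).
    replace (20 * INR Q * (e1 * / INR Q)) with e in H2 by (unfold e1; field; lra). auto. }
  intros eps Heps. assert (HN0r : 1 <= INR N0) by (apply INR_ge1; auto).
  set (e' := eps / (8 * INR N0 * (1 + M))).
  assert (He' : 0 < e') by (unfold e'; apply Rdiv_lt_0_compat; [lra| nra]).
  destruct (HW e' He') as [Q0 HQ0].
  exists (2 * (Q0 + N0 + 1))%nat. intros j Hj. unfold R_dist. rewrite Rminus_0_r.
  set (Q := (j / 2)%nat).
  assert (HQ : (2 * Q <= j <= 2 * Q + 1)%nat).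
  { pose proof (Nat.div_mod j 2 ltac:(lia)). pose proof (Nat.mod_upper_bound j 2 ltac:(lia)). unfold Q. lia. }
  assert (HQ2 : (Q0 + N0 + 1 <= Q)%nat) by (unfold Q; apply Nat.div_le_lower_bound; lia).
  pose proof (count_lemma b N0 M Hb HN0 HM HC Q j ltac:(lia) ltac:(lia) HQ).
  pose proof (HQ0 Q ltac:(lia) ltac:(lia)).
  assert (0 <= INR j * b j) by (apply Rmult_le_pos; [apply pos_INR| apply Hb; lia]).
  rewrite Rabs_right by lra.
  assert (4 * INR N0 * (1 + M) * sm (fun i => b (Q + i)%nat) (2 * Q + 1) <= 4 * INR N0 * (1 + M) * e')
    by (apply Rmult_le_compat_l; [nra| auto]).
  replace (4 * INR N0 * (1 + M) * e') with (eps / 2) in H2 by (unfold e'; field; nra). lra.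
Qed.


Theorem theorem2 (b : nat -> R) (N0 : nat) (M : R) :
  (forall n : nat, (1 <= n)%nat -> 0 <= b n) ->
  (1 <= N0)%nat -> 0 < M ->
  (forall m : nat, (1 <= m)%nat -> var_block b m <= M * block_max b m N0) ->
  (sin_series_unif_conv b <-> Un_cv (fun n => INR n * b n) 0) /\
  (sin_series_conv_cont b <-> Un_cv (fun n => INR n * b n) 0).
Proof.
  intros Hb HN0 HM HC.
  assert (A : Un_cv (fun n => INR n * b n) 0 -> sin_series_unif_conv b).
  { intros Hcv. apply unif_to_i. apply (unifA b N0 M Hb HM HC Hcv). }
  assert (C : sin_series_conv_cont b -> Un_cv (fun n => INR n * b n) 0) by (apply (ii_to_nb b N0 M); auto).
  split; split; intros H.
  - apply C, i_to_ii, H.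
  - apply A, H.
  - apply C, H.
  - apply i_to_ii, A, H.
Qed.
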